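(* Suppose that $A_1,\dots,A_d$ are continuous functions of bounded variation on $[0,1]$, $f\in C[0,1]$, and $g_1,\dots,g_d\in C([0,1]\times\mathbb{R})$ satisfy a linear growth condition, i.e. there is $c\ge0$ with $|g_i(t,\xi)|\le c(1+|\xi|)$ for all $i$, $t\in[0,1]$, $\xi\in\mathbb{R}$. Then there exists at least one solution $B\in C[0,1]$ of the Stieltjes integral equation $$B(t)=f(t)+\sum_{i=1}^d\int_0^tg_i(s,B(s))\,dA_i(s),\qquad 0\le t\le1.$$ Moreover, this solution is unique if $g_1,\dots,g_d$ in addition satisfy a local Lipschitz condition: for each $p>0$ there is $L_p\ge0$ with $|g_i(t,\xi)-g_i(t,\zeta)|\le L_p|\xi-\zeta|$ for all $i$, $\xi,\zeta\in[-p,p]$, $t\in[0,1]$.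
   Context: The integrals are Riemann--Stieltjes integrals. *)

(* Defs.v *)
From Stdlib Require Import Reals Lra.
Open Scope R_scope.

Fixpoint rsum (n : nat) (F : nat -> R) : R :=
  match n with
  | O => 0
  | S m => rsum m F + F m
  end.

Definition is_partition (a b : R) (n : nat) (p : nat -> R) : Prop :=
  p 0%nat = a /\ p n = b /\ (forall k, (k < n)%nat -> p k <= p (S k)).

Definition mesh_lt (n : nat) (p : nat -> R) (delta : R) : Prop :=
  forall k, (k < n)%nat -> p (S k) - p k < delta.

Definition is_tagging (n : nat) (p xi : nat -> R) : Prop :=
  forall k, (k < n)%nat -> p k <= xi k <= p (S k).

Definition RS_sum (h A : R -> R) (n : nat) (p xi : nat -> R) : R :=
  rsum n (fun k => h (xi k) * (A (p (S k)) - A (p k))).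

Definition is_RS_integral (h A : R -> R) (a b I : R) : Prop :=
  forall eps, 0 < eps -> exists delta, 0 < delta /\
    forall n p xi, is_partition a b n p -> mesh_lt n p delta ->
      is_tagging n p xi -> Rabs (RS_sum h A n p xi - I) < eps.

Definition bounded_variation01 (A : R -> R) : Prop :=
  exists M, forall n p, is_partition 0 1 n p ->
    rsum n (fun k => Rabs (A (p (S k)) - A (p k))) <= M.

Definition cont01 (f : R -> R) : Prop :=
  forall t, 0 <= t <= 1 -> forall eps, 0 < eps -> exists delta, 0 < delta /\
    forall s, 0 <= s <= 1 -> Rabs (s - t) < delta -> Rabs (f s - f t) < eps.

Definition cont01R (g : R -> R -> R) : Prop :=
  forall t x, 0 <= t <= 1 -> forall eps, 0 < eps -> exists delta, 0 < delta /\
    forall s z, 0 <= s <= 1 -> Rabs (s - t) < delta -> Rabs (z - x) < delta ->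
      Rabs (g s z - g t x) < eps.

(* B solves  B(t) = f(t) + sum_{i<d} int_0^t g_i(s,B(s)) dA_i(s)  on [0,1]
   (indices i = 0..d-1 stand for 1..d) *)
Definition is_solution (d : nat) (A : nat -> R -> R) (f : R -> R)
  (g : nat -> R -> R -> R) (B : R -> R) : Prop :=
  forall t, 0 <= t <= 1 -> exists I : nat -> R,
    (forall i, (i < d)%nat -> is_RS_integral (fun s => g i s (B s)) (A i) 0 t (I i)) /\
    B t = f t + rsum d I.

(* Main.v *)
Require Import Defs.
From Stdlib Require Import Reals Lra Lia.
From Stdlib Require Import IndefiniteDescription Classical.
Open Scope R_scope.


Lemma Rabs_cases x : (Rabs x = x /\ 0 <= x) \/ (Rabs x = - x /\ x < 0).
Proof. unfold Rabs; destruct (Rcase_abs x); [right|left]; split; auto; lra. Qed.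

Ltac rabs := repeat match goal with
  | |- context [Rabs ?x] => let E := fresh in
      destruct (Rabs_cases x) as [[E ?]|[E ?]]; rewrite E in *; clear E
  | H0 : context [Rabs ?x] |- _ => let E := fresh in
      destruct (Rabs_cases x) as [[E ?]|[E ?]]; rewrite E in *; clear E
  end; lra.

Lemma rsum_ext n F G : (forall k, (k < n)%nat -> F k = G k) -> rsum n F = rsum n G.
Proof. induction n; simpl; intros H; [reflexivity|].
  rewrite IHn by (intros; apply H; lia). rewrite H by lia. reflexivity. Qed.

Lemma rsum_le n F G : (forall k, (k < n)%nat -> F k <= G k) -> rsum n F <= rsum n G.
Proof. induction n; simpl; intros H; [lra|].
  assert (rsum n F <= rsum n G) by (apply IHn; intros; apply H; lia).
  assert (F n <= G n) by (apply H; lia). lra. Qed.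

Lemma rsum_plus n F G : rsum n (fun k => F k + G k) = rsum n F + rsum n G.
Proof. induction n; simpl; [lra|]. rewrite IHn; lra. Qed.

Lemma rsum_scal n c F : rsum n (fun k => c * F k) = c * rsum n F.
Proof. induction n; simpl; [lra|]. rewrite IHn; lra. Qed.

Lemma rsum_minus n F G : rsum n (fun k => F k - G k) = rsum n F - rsum n G.
Proof. induction n; simpl; [lra|]. rewrite IHn; lra. Qed.

Lemma rsum_abs n F : Rabs (rsum n F) <= rsum n (fun k => Rabs (F k)).
Proof. induction n; simpl. rewrite Rabs_R0; lra.
  eapply Rle_trans; [apply Rabs_triang|]. lra. Qed.

Lemma rsum_nonneg n F : (forall k, (k < n)%nat -> 0 <= F k) -> 0 <= rsum n F.
Proof. intros H. replace 0 with (rsum n (fun _ => 0)).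
  apply rsum_le; auto. induction n; simpl; auto. rewrite IHn; [lra|]. intros; apply H; lia. Qed.

Lemma rsum_zero n : rsum n (fun _ => 0) = 0.
Proof. induction n; simpl; lra. Qed.

Lemma rsum_tele n a : rsum n (fun k => a (S k) - a k) = a n - a O.
Proof. induction n; simpl; [lra|]. rewrite IHn; lra. Qed.

Lemma rsum_app n m F : rsum (n + m) F = rsum n F + rsum m (fun k => F (n + k)%nat).
Proof. induction m; simpl. rewrite Nat.add_0_r; lra.
  rewrite Nat.add_succ_r; simpl. rewrite IHm; lra. Qed.

Lemma rsum_swap d n F : rsum d (fun i => rsum n (F i)) = rsum n (fun k => rsum d (fun i => F i k)).
Proof. induction d; simpl. rewrite rsum_zero; auto.
  rewrite IHd. rewrite <- rsum_plus. reflexivity. Qed.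

Lemma close_eq x y : (forall e, 0 < e -> Rabs (x - y) <= e) -> x = y.
Proof. intros H. destruct (Req_dec x y); auto.
  assert (0 < Rabs (x - y)) by (apply Rabs_pos_lt; lra).
  specialize (H (Rabs (x - y) / 2) ltac:(lra)). lra. Qed.

Lemma div_nonneg a b : 0 <= a -> 0 < b -> 0 <= a / b.
Proof. intros. unfold Rdiv. apply Rmult_le_pos; auto. left; apply Rinv_0_lt_compat; auto. Qed.

Lemma part_mono a b n p : is_partition a b n p ->
  forall j k, (j <= k)%nat -> (k <= n)%nat -> p j <= p k.
Proof. intros [_ [_ H]] j k Hjk. induction Hjk; intros; [lra|].
  assert (p j <= p m) by (apply IHHjk; lia). assert (p m <= p (S m)) by (apply H; lia). lra. Qed.

Lemma part_in a b n p : is_partition a b n p -> forall k, (k <= n)%nat -> a <= p k <= b.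
Proof. intros Hp k Hk. pose proof Hp as [H0 [Hn _]]. split.
  rewrite <- H0; apply (part_mono a b n p Hp); lia.
  rewrite <- Hn; apply (part_mono a b n p Hp); lia. Qed.

Lemma tag_in a b n p xi : is_partition a b n p -> is_tagging n p xi ->
  forall k, (k < n)%nat -> a <= xi k <= b.
Proof. intros Hp Ht k Hk. pose proof (part_in _ _ _ _ Hp k ltac:(lia)).
  pose proof (part_in _ _ _ _ Hp (S k) ltac:(lia)). specialize (Ht k Hk). lra. Qed.

Lemma tag_left n p : (forall k, (k < n)%nat -> p k <= p (S k)) -> is_tagging n p p.
Proof. intros H k Hk. specialize (H k Hk). lra. Qed.

Definition unif (a b : R) (N : nat) : nat -> R := fun k => a + INR k * ((b - a) / INR N).

Lemma unif_part a b N : a <= b -> (0 < N)%nat -> is_partition a b N (unif a b N).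
Proof. intros Hab HN. unfold unif. assert (0 < INR N) by (apply lt_0_INR; lia).
  split; [simpl; lra|]. split. field; lra.
  intros k _. rewrite S_INR. assert (0 <= (b - a) / INR N) by (apply div_nonneg; lra). lra. Qed.

Lemma unif_mesh a b N dl : (b - a) / INR N < dl -> mesh_lt N (unif a b N) dl.
Proof. intros H k _. unfold unif. rewrite S_INR. lra. Qed.

Lemma exists_fine a b dl : 0 < dl -> exists N, (0 < N)%nat /\ (b - a) / INR N < dl.
Proof. intros Hd. destruct (INR_unbounded (Rabs (b - a) / dl)) as [N HN].
  assert (0 <= Rabs (b - a) / dl) by (apply div_nonneg; [apply Rabs_pos|lra]).
  assert (0 < INR N) by lra. assert (0 < N)%nat by (apply INR_lt; simpl; lra).
  exists N. split; auto.
  assert (Rabs (b - a) < dl * INR N).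
  { apply Rmult_lt_reg_r with (/dl). apply Rinv_0_lt_compat; lra.
    replace (dl * INR N * / dl) with (INR N) by (field; lra). unfold Rdiv in HN. lra. }
  assert (b - a <= Rabs (b - a)) by apply RRle_abs.
  apply Rmult_lt_reg_r with (INR N); auto.
  unfold Rdiv. rewrite Rmult_assoc, Rinv_l by lra. lra. Qed.

Definition pcat (n1 : nat) (p1 p2 : nat -> R) : nat -> R :=
  fun k => if (k <=? n1)%nat then p1 k else p2 (k - n1)%nat.

Lemma pcat_part a b c n1 n2 p1 p2 : is_partition a b n1 p1 -> is_partition b c n2 p2 ->
  is_partition a c (n1 + n2) (pcat n1 p1 p2).
Proof. intros [H10 [H1n H1m]] [H20 [H2n H2m]]. unfold pcat. split; [|split].
  - simpl. auto.
  - destruct (Nat.leb_spec (n1 + n2) n1).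
    + assert (n2 = 0)%nat as E by lia. rewrite E in *. rewrite Nat.add_0_r, H1n, <- H20; auto.
    + replace (n1 + n2 - n1)%nat with n2 by lia. auto.
  - intros k Hk. destruct (Nat.leb_spec k n1); destruct (Nat.leb_spec (S k) n1).
    + apply H1m; lia.
    + assert (k = n1) as E by lia. rewrite E. replace (S n1 - n1)%nat with 1%nat by lia.
      rewrite H1n, <- H20. apply H2m; lia.
    + lia.
    + replace (S k - n1)%nat with (S (k - n1)) by lia. apply H2m; lia. Qed.

Lemma pcat_sum n1 n2 p1 p2 (F : R -> R -> R) : p1 n1 = p2 O ->
  rsum (n1 + n2) (fun k => F (pcat n1 p1 p2 (S k)) (pcat n1 p1 p2 k)) =
  rsum n1 (fun k => F (p1 (S k)) (p1 k)) + rsum n2 (fun k => F (p2 (S k)) (p2 k)).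
Proof. intros Hj. rewrite rsum_app. unfold pcat. f_equal.
  - apply rsum_ext. intros k Hk. destruct (Nat.leb_spec (S k) n1); [|lia].
    destruct (Nat.leb_spec k n1); [auto|lia].
  - apply rsum_ext. intros k Hk. destruct (Nat.leb_spec (S (n1 + k)) n1); [lia|].
    replace (S (n1 + k) - n1)%nat with (S k) by lia.
    destruct (Nat.leb_spec (n1 + k) n1).
    + assert (k = 0)%nat by lia. subst. rewrite Nat.add_0_r. rewrite Hj. auto.
    + replace (n1 + k - n1)%nat with k by lia. auto. Qed.

Lemma pcat_mesh n1 n2 p1 p2 dl : p1 n1 = p2 O -> mesh_lt n1 p1 dl -> mesh_lt n2 p2 dl ->
  mesh_lt (n1 + n2) (pcat n1 p1 p2) dl.
Proof. intros Hj H1 H2 k Hk. unfold pcat.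
  destruct (Nat.leb_spec (S k) n1); destruct (Nat.leb_spec k n1); try lia.
  - apply H1; lia.
  - assert (k = n1) by lia. subst. replace (S n1 - n1)%nat with 1%nat by lia.
    rewrite Hj. apply H2; lia.
  - replace (S k - n1)%nat with (S (k - n1)) by lia. apply H2; lia. Qed.


Definition varsum (A : R -> R) n (p : nat -> R) := rsum n (fun k => Rabs (A (p (S k)) - A (p k))).
Definition bvb (A : R -> R) a b Vb := forall n p, is_partition a b n p -> varsum A n p <= Vb.
Definition ucon a b (h : R -> R) := forall e, 0 < e -> exists dl, 0 < dl /\
  forall u v, a <= u <= b -> a <= v <= b -> Rabs (u - v) < dl -> Rabs (h u - h v) < e.

Lemma fine_part a b dl : a <= b -> 0 < dl -> exists N, (0 < N)%nat /\ is_partition a b N (unif a b N) /\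
  mesh_lt N (unif a b N) dl /\ is_tagging N (unif a b N) (unif a b N).
Proof. intros Hab Hd. destruct (exists_fine a b dl Hd) as [N [HN Hm]]. exists N.
  pose proof (unif_part a b N Hab HN) as Hp. split; auto. split; auto. split. apply unif_mesh; auto.
  apply tag_left. apply Hp. Qed.

Lemma RS_unique h A a b I1 I2 : a <= b -> is_RS_integral h A a b I1 ->
  is_RS_integral h A a b I2 -> I1 = I2.
Proof. intros Hab H1 H2. apply close_eq. intros e He.
  destruct (H1 (e/2) ltac:(lra)) as [d1 [Hd1 H1']]. destruct (H2 (e/2) ltac:(lra)) as [d2 [Hd2 H2']].
  destruct (fine_part a b (Rmin d1 d2) Hab) as [N [HN [Hp [Hm Ht]]]]. apply Rmin_glb_lt; auto.
  assert (mesh_lt N (unif a b N) d1). { intros k Hk. specialize (Hm k Hk). pose proof (Rmin_l d1 d2). lra. }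
  assert (mesh_lt N (unif a b N) d2). { intros k Hk. specialize (Hm k Hk). pose proof (Rmin_r d1 d2). lra. }
  specialize (H1' _ _ _ Hp H Ht). specialize (H2' _ _ _ Hp H0 Ht). rabs. Qed.

Lemma RS_ext h1 h2 A a b I : (forall s, a <= s <= b -> h1 s = h2 s) ->
  is_RS_integral h1 A a b I -> is_RS_integral h2 A a b I.
Proof. intros He H e Hep. destruct (H e Hep) as [dl [Hd H']]. exists dl. split; auto.
  intros n p xi Hp Hm Ht. specialize (H' n p xi Hp Hm Ht). unfold RS_sum in *.
  erewrite rsum_ext. apply H'. intros k Hk. simpl. rewrite He; auto.
  apply (tag_in a b n p xi Hp Ht k Hk). Qed.

Lemma RS_plus h1 h2 A a b I1 I2 : is_RS_integral h1 A a b I1 -> is_RS_integral h2 A a b I2 ->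
  is_RS_integral (fun s => h1 s + h2 s) A a b (I1 + I2).
Proof. intros H1 H2 e He.
  destruct (H1 (e/2) ltac:(lra)) as [d1 [Hd1 H1']]. destruct (H2 (e/2) ltac:(lra)) as [d2 [Hd2 H2']].
  exists (Rmin d1 d2). split. apply Rmin_glb_lt; auto. intros n p xi Hp Hm Ht.
  assert (mesh_lt n p d1). { intros k Hk. specialize (Hm k Hk). pose proof (Rmin_l d1 d2). lra. }
  assert (mesh_lt n p d2). { intros k Hk. specialize (Hm k Hk). pose proof (Rmin_r d1 d2). lra. }
  specialize (H1' _ _ _ Hp H Ht). specialize (H2' _ _ _ Hp H0 Ht). unfold RS_sum in *.
  rewrite (rsum_ext n _ (fun k => h1 (xi k) * (A (p (S k)) - A (p k)) + h2 (xi k) * (A (p (S k)) - A (p k)))).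
  rewrite rsum_plus. rabs. intros; ring. Qed.

Lemma RS_scal h A a b c I : is_RS_integral h A a b I ->
  is_RS_integral (fun s => c * h s) A a b (c * I).
Proof. intros H e He. destruct (H (e / (Rabs c + 1))) as [dl [Hd H']].
  apply Rdiv_lt_0_compat; auto. pose proof (Rabs_pos c); lra.
  exists dl; split; auto. intros n p xi Hp Hm Ht. specialize (H' _ _ _ Hp Hm Ht). unfold RS_sum in *.
  rewrite (rsum_ext n _ (fun k => c * (h (xi k) * (A (p (S k)) - A (p k))))) by (intros; ring).
  rewrite rsum_scal. rewrite <- Rmult_minus_distr_l, Rabs_mult.
  pose proof (Rabs_pos c). pose proof (Rabs_pos (rsum n (fun k => h (xi k) * (A (p (S k)) - A (p k))) - I)).
  apply Rle_lt_trans with ((Rabs c + 1) * Rabs (rsum n (fun k => h (xi k) * (A (p (S k)) - A (p k))) - I)). nra.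
  apply Rmult_lt_reg_r with (/ (Rabs c + 1)). apply Rinv_0_lt_compat; lra.
  replace ((Rabs c + 1) * Rabs (rsum n (fun k => h (xi k) * (A (p (S k)) - A (p k))) - I) * / (Rabs c + 1))
    with (Rabs (rsum n (fun k => h (xi k) * (A (p (S k)) - A (p k))) - I)) by (field; lra).
  exact H'. Qed.

Lemma RS_const c A a b : is_RS_integral (fun _ => c) A a b (c * (A b - A a)).
Proof. intros e He. exists 1. split; [lra|]. intros n p xi [H0 [Hn _]] _ _. unfold RS_sum.
  rewrite rsum_scal, (rsum_tele n (fun k => A (p k))). simpl. rewrite Hn, H0.
  replace (c * (A b - A a) - c * (A b - A a)) with 0 by ring. rewrite Rabs_R0. auto. Qed.

Definition Hs (x s : R) : R := if Rle_dec x s then 1 else 0.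

Lemma RS_step a b x A : a <= x <= b -> ucon a b A ->
  is_RS_integral (Hs x) A a b (A b - A x).
Proof. intros Hx HA e He. destruct (HA (e/3) ltac:(lra)) as [dl [Hd HA']]. exists dl. split; auto.
  intros n p xi Hp Hm Ht.
  assert (forall m, (m <= n)%nat -> (p m < x -> RS_sum (Hs x) A m p xi = 0) /\
     (x <= p m -> Rabs (RS_sum (Hs x) A m p xi - (A (p m) - A x)) <= 2 * (e/3))).
  { induction m; intros Hmn; unfold RS_sum in *; simpl.
    - destruct Hp as [H0 _]. split; intros; auto. replace (A (p O)) with (A x) by (f_equal; lra).
      replace (0 - (A x - A x)) with 0 by ring. rewrite Rabs_R0; lra.
    - specialize (IHm ltac:(lia)). destruct IHm as [IH1 IH2].
      pose proof (part_in _ _ _ _ Hp m ltac:(lia)). pose proof (part_in _ _ _ _ Hp (S m) ltac:(lia)).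
      pose proof (Ht m ltac:(lia)). pose proof (Hm m ltac:(lia)). destruct Hp as [_ [_ Hmono]].
      pose proof (Hmono m ltac:(lia)). unfold Hs in *. split; intros.
      + rewrite IH1 by lra. destruct (Rle_dec x (xi m)); [lra|]. ring.
      + destruct (Rle_dec x (p m)).
        * destruct (Rle_dec x (xi m)); [|lra]. specialize (IH2 r).
          replace (rsum m (fun k => (if Rle_dec x (xi k) then 1 else 0) * (A (p (S k)) - A (p k))) +
             1 * (A (p (S m)) - A (p m)) - (A (p (S m)) - A x)) with
             (rsum m (fun k => (if Rle_dec x (xi k) then 1 else 0) * (A (p (S k)) - A (p k))) - (A (p m) - A x)) by ring.
          exact IH2.
        * rewrite IH1 by lra.
          assert (Rabs (A (p (S m)) - A (p m)) < e/3) by (apply HA'; try lra; rabs).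
          assert (Rabs (A (p (S m)) - A x) < e/3) by (apply HA'; try lra; rabs).
          destruct (Rle_dec x (xi m)); rabs. }
  destruct (H n (le_n n)) as [_ H2]. pose proof Hp as [_ [Hn _]]. rewrite Hn in H2. specialize (H2 ltac:(lra)). lra. Qed.


Lemma RS_sum_diff h1 h2 A a b n p xi e : is_partition a b n p -> is_tagging n p xi ->
  (forall s, a <= s <= b -> Rabs (h1 s - h2 s) <= e) ->
  Rabs (RS_sum h1 A n p xi - RS_sum h2 A n p xi) <= e * varsum A n p.
Proof. intros Hp Ht He. unfold RS_sum, varsum. rewrite <- rsum_minus, <- rsum_scal.
  eapply Rle_trans; [apply rsum_abs|]. apply rsum_le. intros k Hk.
  rewrite <- Rmult_minus_distr_r, Rabs_mult. apply Rmult_le_compat_r. apply Rabs_pos.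
  apply He. apply (tag_in a b n p xi Hp Ht k Hk). Qed.

Lemma bvb_nonneg A a b Vb : a <= b -> bvb A a b Vb -> 0 <= Vb.
Proof. intros Hab H. destruct (fine_part a b 1 Hab ltac:(lra)) as [N [_ [Hp _]]].
  specialize (H _ _ Hp). eapply Rle_trans; [|apply H]. apply rsum_nonneg. intros; apply Rabs_pos. Qed.

Definition eps_n (n : nat) := / (INR n + 1).

Lemma eps_n_pos n : 0 < eps_n n.
Proof. unfold eps_n. apply Rinv_0_lt_compat. pose proof (pos_INR n); lra. Qed.

Lemma eps_n_small e : 0 < e -> exists N, forall n, (N <= n)%nat -> eps_n n < e.
Proof. intros He. destruct (INR_unbounded (/ e)) as [N HN]. exists N. intros n Hn.
  unfold eps_n. apply le_INR in Hn. assert (0 < /e) by (apply Rinv_0_lt_compat; auto).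
  replace e with (/ / e) by (field; lra). apply Rinv_lt_contravar. nra. lra. Qed.

Lemma RS_unif_limit h A a b Vb : a <= b -> bvb A a b Vb ->
  (forall e, 0 < e -> exists h' I', is_RS_integral h' A a b I' /\
      forall s, a <= s <= b -> Rabs (h s - h' s) <= e) ->
  exists I, is_RS_integral h A a b I.
Proof. intros Hab HV Happ. pose proof (bvb_nonneg A a b Vb Hab HV) as HV0.
  assert (Hc : forall n : nat, {I' | exists h', is_RS_integral h' A a b I' /\
      forall s, a <= s <= b -> Rabs (h s - h' s) <= eps_n n}).
  { intros n. apply constructive_indefinite_description.
    destruct (Happ (eps_n n) (eps_n_pos n)) as [h' [I' [H1 H2]]]. exists I', h'. auto. }
  set (u := fun n => proj1_sig (Hc n)).
  assert (Hu : forall n, exists h', is_RS_integral h' A a b (u n) /\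
      forall s, a <= s <= b -> Rabs (h s - h' s) <= eps_n n) by (intros n; exact (proj2_sig (Hc n))).
  assert (Hclose : forall n e, 0 < e -> exists dl, 0 < dl /\ forall N p xi, is_partition a b N p ->
     mesh_lt N p dl -> is_tagging N p xi -> Rabs (RS_sum h A N p xi - u n) <= eps_n n * Vb + e).
  { intros n e He. destruct (Hu n) as [h' [H1 H2]]. destruct (H1 e He) as [dl [Hd H']].
    exists dl; split; auto. intros N p xi Hp Hm Ht. specialize (H' _ _ _ Hp Hm Ht).
    pose proof (RS_sum_diff h h' A a b N p xi (eps_n n) Hp Ht H2).
    assert (eps_n n * varsum A N p <= eps_n n * Vb) by (apply Rmult_le_compat_l; [left; apply eps_n_pos| apply HV; auto]).
    rabs. }
  assert (Hcau : forall n m, Rabs (u n - u m) <= (eps_n n + eps_n m) * Vb).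
  { intros n m. apply Rle_plus_epsilon. intros e He.
    destruct (Hclose n (e/2) ltac:(lra)) as [d1 [Hd1 H1']]. destruct (Hclose m (e/2) ltac:(lra)) as [d2 [Hd2 H2']].
    destruct (fine_part a b (Rmin d1 d2) Hab) as [N [HN [Hp [Hm Ht]]]]. apply Rmin_glb_lt; auto.
    assert (mesh_lt N (unif a b N) d1). { intros k Hk. specialize (Hm k Hk). pose proof (Rmin_l d1 d2). lra. }
    assert (mesh_lt N (unif a b N) d2). { intros k Hk. specialize (Hm k Hk). pose proof (Rmin_r d1 d2). lra. }
    specialize (H1' _ _ _ Hp H Ht). specialize (H2' _ _ _ Hp H0 Ht). rabs. }
  assert (Hcc : Cauchy_crit u).
  { intros e He. set (q := e / (2 * Vb + 1)). assert (Hq : q * (2 * Vb + 1) = e) by (unfold q; field; lra).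
    destruct (eps_n_small q) as [N HN]. unfold q; apply Rdiv_lt_0_compat; lra. exists N. intros n m Hn Hm. unfold Rdist.
    eapply Rle_lt_trans; [apply Hcau|]. pose proof (HN n Hn). pose proof (HN m Hm).
    pose proof (eps_n_pos n). pose proof (eps_n_pos m). nra. }
  destruct (R_complete u Hcc) as [l Hl].
  assert (Hul : forall n, Rabs (u n - l) <= eps_n n * Vb).
  { intros n. apply Rle_plus_epsilon. intros e He.
    destruct (Hl (e/2) ltac:(lra)) as [N1 HN1]. set (q := e / (2 * Vb + 2)).
    assert (Hq : q * (2 * Vb + 2) = e) by (unfold q; field; lra).
    destruct (eps_n_small q) as [N2 HN2]. unfold q; apply Rdiv_lt_0_compat; lra.
    specialize (HN1 (N1 + N2)%nat ltac:(lia)). specialize (HN2 (N1 + N2)%nat ltac:(lia)).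
    unfold Rdist in HN1. pose proof (Hcau n (N1 + N2)%nat). pose proof (eps_n_pos (N1 + N2)).
    assert (eps_n (N1 + N2) * Vb <= e / 2) by nra. rabs. }
  exists l. intros e He. set (q := e / (4 * Vb + 4)).
  assert (Hq : q * (4 * Vb + 4) = e) by (unfold q; field; lra).
  destruct (eps_n_small q) as [N HN]. unfold q; apply Rdiv_lt_0_compat; lra.
  specialize (HN N (le_n N)). pose proof (eps_n_pos N).
  destruct (Hclose N (e/4) ltac:(lra)) as [dl [Hd H']]. exists dl; split; auto.
  intros n p xi Hp Hm Ht. specialize (H' _ _ _ Hp Hm Ht). specialize (Hul N).
  assert (eps_n N * Vb <= e / 4) by nra. rabs.
Qed.

Fixpoint Gst (h : R -> R) (x : nat -> R) (m : nat) : R -> R :=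
  match m with
  | O => fun _ => h (x O)
  | S m' => fun s => Gst h x m' s + (h (x m) - h (x m')) * Hs (x m) s
  end.

Lemma RS_exists h A a b Vb : a <= b -> ucon a b h -> ucon a b A -> bvb A a b Vb ->
  exists I, is_RS_integral h A a b I.
Proof. intros Hab Hh HA HV. apply (RS_unif_limit h A a b Vb Hab HV). intros e He.
  destruct (Hh e He) as [dl [Hd Hh']]. destruct (exists_fine a b dl Hd) as [N [HN Hm]].
  set (x := unif a b N). pose proof (unif_part a b N Hab HN) as Hp. fold x in Hp.
  assert (Hmesh : forall k, (k < N)%nat -> x (S k) - x k < dl) by (apply unif_mesh; auto).
  assert (Hint : forall m, (m <= N)%nat -> exists I, is_RS_integral (Gst h x m) A a b I).
  { induction m; intros Hmn.
    - eexists. apply RS_const.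
    - destruct (IHm ltac:(lia)) as [I HI]. eexists. simpl. apply (RS_plus (Gst h x m) (fun s => (h (x (S m)) - h (x m)) * Hs (x (S m)) s)).
      exact HI. apply RS_scal. apply RS_step; auto. apply (part_in a b N x Hp); lia. }
  assert (Hval : forall s, a <= s -> forall m, (m <= N)%nat -> exists i, (i <= m)%nat /\ x i <= s /\
     (i = m \/ s < x (S i)) /\ Gst h x m s = h (x i)).
  { intros s Hs0 m. induction m; intros Hmn.
    - exists O. split; [lia|]. split. destruct Hp as [H0 _]. lra. split; auto.
    - destruct (IHm ltac:(lia)) as [i [Hi [Hxi [Hor Hg]]]]. simpl. rewrite Hg. unfold Hs.
      destruct (Rle_dec (x (S m)) s).
      + assert (i = m).
        { destruct Hor as [|Hlt]; auto. destruct (Nat.eq_dec i m); auto.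
          assert (x (S i) <= x (S m)) by (apply (part_mono a b N x Hp); lia). lra. }
        subst i. exists (S m). split; [lia|]. split; auto. split; auto. ring.
      + exists i. split; [lia|]. split; auto. split. destruct Hor as [->|]; auto. lra. ring. }
  destruct (Hint N (le_n N)) as [I HI]. exists (Gst h x N), I. split; auto.
  intros s Hs. destruct (Hval s (proj1 Hs) N (le_n N)) as [i [Hi [Hxi [Hor Hg]]]]. rewrite Hg.
  left. pose proof (part_in a b N x Hp i Hi). apply Hh'; auto.
  destruct (Nat.eq_dec i N) as [->|Hne].
  - destruct Hp as [_ [Hn _]]. rewrite Hn in *. rabs.
  - destruct Hor as [|Hlt]; [lia|]. pose proof (Hmesh i ltac:(lia)). rabs.
Qed.


Lemma choice_R (P : R -> R -> Prop) : (forall t, exists d, P t d) -> exists F : R -> R, forall t, P t (F t).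
Proof. intros H. exists (fun t => proj1_sig (constructive_indefinite_description _ (H t))).
  intros t. exact (proj2_sig (constructive_indefinite_description _ (H t))). Qed.

Lemma choice_nat (P : nat -> R -> Prop) : (forall n, exists d, P n d) -> exists F : nat -> R, forall n, P n (F n).
Proof. intros H. exists (fun t => proj1_sig (constructive_indefinite_description _ (H t))).
  intros t. exact (proj2_sig (constructive_indefinite_description _ (H t))). Qed.

Lemma valadh_close u l : ValAdh u l -> forall e, 0 < e -> forall N, exists p, (N <= p)%nat /\ Rabs (u p - l) < e.
Proof. intros H e He N. destruct (H (disc l (mkposreal e He)) N) as [p [Hp Hv]].
  exists (mkposreal e He). intros y Hy. exact Hy. exists p. split; auto. Qed.

Lemma cluster01 (u : nat -> R) : (forall n, 0 <= u n <= 1) ->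
  exists l, 0 <= l <= 1 /\ forall e, 0 < e -> forall N, exists p, (N <= p)%nat /\ Rabs (u p - l) < e.
Proof. intros Hu. destruct (Bolzano_Weierstrass u (fun c => 0 <= c <= 1) (compact_P3 0 1) Hu) as [l Hl].
  pose proof (valadh_close u l Hl) as H. exists l. split; auto.
  split; apply Rnot_lt_le; intros Hlt.
  - destruct (H (- l) ltac:(lra) O) as [p [_ Hp]]. specialize (Hu p). rabs.
  - destruct (H (l - 1) ltac:(lra) O) as [p [_ Hp]]. specialize (Hu p). rabs. Qed.

Lemma lebesgue (dt : R -> R) : (forall t, 0 <= t <= 1 -> 0 < dt t) ->
  exists dl, 0 < dl /\ forall s, 0 <= s <= 1 -> exists t, 0 <= t <= 1 /\ Rabs (s - t) + dl <= dt t.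
Proof. intros Hdt. apply NNPP. intros Hn.
  assert (Hs : forall n, exists s, 0 <= s <= 1 /\ forall t, 0 <= t <= 1 -> dt t < Rabs (s - t) + eps_n n).
  { intros n. apply NNPP. intros Hn2. apply Hn. exists (eps_n n). split. apply eps_n_pos.
    intros s Hs1. apply NNPP. intros Hs2. apply Hn2. exists s. split; auto.
    intros t Ht. apply Rnot_le_lt. intros Hle. apply Hs2. exists t. auto. }
  destruct (choice_nat _ Hs) as [u Hu].
  destruct (cluster01 u) as [l [Hl Hcl]]. intros n; apply (Hu n).
  pose proof (Hdt l Hl) as Hd. destruct (eps_n_small (dt l / 2) ltac:(lra)) as [N HN].
  destruct (Hcl (dt l / 2) ltac:(lra) N) as [p [Hp Hup]]. specialize (HN p Hp).
  destruct (Hu p) as [_ Hu2]. specialize (Hu2 l Hl). lra. Qed.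

Lemma uc_of_cont01 f : cont01 f -> ucon 0 1 f.
Proof. intros Hf e He.
  assert (H : forall t, exists d, 0 < d /\ (0 <= t <= 1 -> forall s, 0 <= s <= 1 -> Rabs (s - t) < d -> Rabs (f s - f t) < e / 2)).
  { intros t. destruct (classic (0 <= t <= 1)) as [Ht|Ht].
    - destruct (Hf t Ht (e/2) ltac:(lra)) as [d [Hd H]]. exists d. auto.
    - exists 1. split; [lra|]. tauto. }
  destruct (choice_R _ H) as [dt Hdt].
  destruct (lebesgue dt) as [dl [Hdl Hleb]]. intros t Ht; apply Hdt.
  exists dl. split; auto. intros u v Hu Hv Huv. destruct (Hleb u Hu) as [t [Ht Htd]].
  destruct (Hdt t) as [_ H2]. assert (Rabs (u - t) < dt t) by lra.
  assert (Rabs (v - t) < dt t) by rabs.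
  specialize (H2 Ht u Hu H0). specialize (H2 ) . pose proof (proj2 (Hdt t) Ht v Hv H1). rabs. Qed.

Lemma ucon_sub a b f : 0 <= a -> b <= 1 -> ucon 0 1 f -> ucon a b f.
Proof. intros Ha Hb H e He. destruct (H e He) as [d [Hd H']]. exists d. split; auto.
  intros u v Hu Hv. apply H'; lra. Qed.

Lemma cont01_bounded f : cont01 f -> exists M, forall t, 0 <= t <= 1 -> Rabs (f t) <= M.
Proof. intros Hf. destruct (uc_of_cont01 f Hf 1 ltac:(lra)) as [d [Hd H]].
  assert (Hk : forall k, forall t, 0 <= t <= 1 -> t <= INR k * (d / 2) -> Rabs (f t) <= Rabs (f 0) + INR k).
  { induction k; intros t Ht Htk.
    - simpl in Htk. replace t with 0 by lra. simpl. lra.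
    - rewrite S_INR in *. destruct (Rle_dec t (INR k * (d / 2))).
      + specialize (IHk t Ht r). lra.
      + set (t' := Rmax 0 (t - d / 2)).
        assert (0 <= t' <= 1 /\ t' <= INR k * (d/2) /\ Rabs (t - t') < d).
        { unfold t', Rmax. destruct (Rle_dec 0 (t - d/2)); pose proof (pos_INR k); assert (0 <= INR k * (d/2)) by (apply Rmult_le_pos; lra); split; try split; try lra; rabs. }
        destruct H0 as [H1 [H2 H3]]. specialize (IHk t' H1 H2).
        specialize (H t t' Ht H1 H3). rabs. }
  destruct (INR_unbounded (2 / d)) as [k Hk2]. exists (Rabs (f 0) + INR k).
  intros t Ht. apply Hk; auto. assert (INR k * (d / 2) > 1).
  { apply Rmult_lt_reg_r with (2 / d). apply Rdiv_lt_0_compat; lra.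
    replace (INR k * (d / 2) * (2 / d)) with (INR k) by (field; lra). lra. }
  lra. Qed.

Lemma cont01_comp g B : cont01R g -> cont01 B -> cont01 (fun s => g s (B s)).
Proof. intros Hg HB t Ht e He. destruct (Hg t (B t) Ht e He) as [dg [Hdg Hg']].
  destruct (HB t Ht dg Hdg) as [dB [HdB HB']]. exists (Rmin dg dB). split. apply Rmin_glb_lt; auto.
  intros s Hs Hst. pose proof (Rmin_l dg dB). pose proof (Rmin_r dg dB). apply Hg'; auto. lra.
  apply HB'; auto. lra. Qed.

Lemma cont01_shift C h : 0 <= h -> cont01 C -> cont01 (fun s => C (Rmax 0 (s - h))).
Proof. intros Hh HC t Ht e He. assert (Hm : 0 <= Rmax 0 (t - h) <= 1) by (unfold Rmax; destruct Rle_dec; lra).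
  destruct (HC _ Hm e He) as [d [Hd H]]. exists d. split; auto. intros s Hs Hst. apply H.
  unfold Rmax; destruct Rle_dec; lra. unfold Rmax; destruct Rle_dec; destruct Rle_dec; rabs. Qed.

Lemma curve_uc g B : cont01R g -> cont01 B -> forall e, 0 < e -> exists eta, 0 < eta /\
  forall s z, 0 <= s <= 1 -> Rabs (z - B s) < eta -> Rabs (g s z - g s (B s)) < e.
Proof. intros Hg HB e He.
  assert (H : forall t, exists d, 0 < d /\ (0 <= t <= 1 -> forall s z, 0 <= s <= 1 -> Rabs (s - t) < d ->
     Rabs (z - B s) < d -> Rabs (g s z - g t (B t)) < e / 2 /\ Rabs (g s (B s) - g t (B t)) < e / 2)).
  { intros t. destruct (classic (0 <= t <= 1)) as [Ht|Ht]; [|exists 1; split; [lra|tauto]].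
    destruct (Hg t (B t) Ht (e/2) ltac:(lra)) as [dg [Hdg Hg']].
    destruct (HB t Ht (dg/2) ltac:(lra)) as [dB [HdB HB']].
    exists (Rmin dB (dg/2)). split. apply Rmin_glb_lt; lra. intros _ s z Hs Hst Hz.
    pose proof (Rmin_l dB (dg/2)). pose proof (Rmin_r dB (dg/2)).
    assert (Rabs (B s - B t) < dg / 2) by (apply HB'; auto; lra).
    split; apply Hg'; auto; try lra; rabs. }
  destruct (choice_R _ H) as [dt Hdt]. destruct (lebesgue dt) as [dl [Hdl Hleb]]. intros t Ht; apply Hdt.
  exists dl. split; auto. intros s z Hs Hz. destruct (Hleb s Hs) as [t [Ht Htd]].
  destruct (Hdt t) as [_ H2]. pose proof (Rabs_pos (s - t)).
  destruct (H2 Ht s z Hs ltac:(lra) ltac:(lra)). rabs. Qed.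


Lemma lub_ex (E : R -> Prop) : exists m, bound E -> (exists x, E x) -> is_lub E m.
Proof. destruct (classic (bound E /\ exists x, E x)) as [[H1 H2]|H].
  - destruct (completeness E H1 H2) as [m Hm]. exists m; auto.
  - exists 0. intros H1 H2. exfalso; auto. Qed.

Definition lub_of (E : R -> Prop) : R := proj1_sig (constructive_indefinite_description _ (lub_ex E)).

Lemma lub_of_spec E : bound E -> (exists x, E x) -> is_lub E (lub_of E).
Proof. unfold lub_of. destruct constructive_indefinite_description; auto. Qed.

Definition VarS (A : R -> R) a b (x : R) : Prop := exists n p, is_partition a b n p /\ x = varsum A n p.
Definition Var (A : R -> R) a b : R := lub_of (VarS A a b).

Definition p2pt (a b : R) : nat -> R := fun k => match k with O => a | _ => b end.

Lemma p2pt_part a b : a <= b -> is_partition a b 1 (p2pt a b).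
Proof. intros H. split; [auto|split; [auto|]]. intros k Hk. assert (k = O) by lia. subst. simpl. auto. Qed.

Lemma varsum_p2pt A a b : varsum A 1 (p2pt a b) = Rabs (A b - A a).
Proof. unfold varsum. simpl. lra. Qed.

Lemma varsum_cat A a b c n1 n2 p1 p2 : is_partition a b n1 p1 -> is_partition b c n2 p2 ->
  varsum A (n1 + n2) (pcat n1 p1 p2) = varsum A n1 p1 + varsum A n2 p2.
Proof. intros [_ [H1 _]] [H2 _]. unfold varsum.
  apply (pcat_sum n1 n2 p1 p2 (fun u v => Rabs (A u - A v))). congruence. Qed.

Lemma varsum_nonneg A n p : 0 <= varsum A n p.
Proof. apply rsum_nonneg. intros; apply Rabs_pos. Qed.

Lemma VarS_bound A a b : 0 <= a -> a <= b -> b <= 1 -> bounded_variation01 A -> bound (VarS A a b).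
Proof. intros Ha Hab Hb [M HM]. exists M. intros x [n [p [Hp ->]]].
  pose proof (pcat_part _ _ _ _ _ _ _ (p2pt_part 0 a Ha) Hp) as H1.
  pose proof (pcat_part _ _ _ _ _ _ _ H1 (p2pt_part b 1 Hb)) as H2.
  specialize (HM _ _ H2). fold (varsum A (1 + n + 1) (pcat (1 + n) (pcat 1 (p2pt 0 a) p) (p2pt b 1))) in HM.
  rewrite (varsum_cat A 0 b 1 _ _ _ _ H1 (p2pt_part b 1 Hb)) in HM.
  rewrite (varsum_cat A 0 a b _ _ _ _ (p2pt_part 0 a Ha) Hp) in HM.
  pose proof (varsum_nonneg A 1 (p2pt 0 a)). pose proof (varsum_nonneg A 1 (p2pt b 1)). lra. Qed.

Lemma VarS_ne A a b : a <= b -> exists x, VarS A a b x.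
Proof. intros H. exists (varsum A 1 (p2pt a b)), 1%nat, (p2pt a b). split; auto. apply p2pt_part; auto. Qed.

Lemma Var_lub A a b : 0 <= a -> a <= b -> b <= 1 -> bounded_variation01 A -> is_lub (VarS A a b) (Var A a b).
Proof. intros. apply lub_of_spec. apply VarS_bound; auto. apply VarS_ne; auto. Qed.

Lemma Var_ge A a b n p : 0 <= a -> b <= 1 -> bounded_variation01 A -> is_partition a b n p ->
  varsum A n p <= Var A a b.
Proof. intros Ha Hb HA Hp. assert (a <= b) by (destruct (part_in a b n p Hp 0 ltac:(lia)) as [? ?];
  destruct (part_in a b n p Hp n ltac:(lia)); destruct Hp as [Hq0 [Hqn _]]; lra).
  destruct (Var_lub A a b Ha H Hb HA) as [Hu _]. apply Hu. exists n, p; auto. Qed.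

Lemma Var_le A a b M : 0 <= a -> a <= b -> b <= 1 -> bounded_variation01 A ->
  (forall n p, is_partition a b n p -> varsum A n p <= M) -> Var A a b <= M.
Proof. intros Ha Hab Hb HA H. destruct (Var_lub A a b Ha Hab Hb HA) as [_ Hl]. apply Hl.
  intros x [n [p [Hp ->]]]. auto. Qed.

Lemma Var_approx A a b e : 0 <= a -> a <= b -> b <= 1 -> bounded_variation01 A -> 0 < e ->
  exists n p, is_partition a b n p /\ Var A a b - e < varsum A n p.
Proof. intros Ha Hab Hb HA He. apply NNPP. intros Hn.
  assert (Var A a b <= Var A a b - e); [|lra].
  apply Var_le; auto. intros n p Hp. apply Rnot_lt_le. intros Hlt. apply Hn. exists n, p; auto. Qed.

Lemma Var_nonneg A a b : 0 <= a -> a <= b -> b <= 1 -> bounded_variation01 A -> 0 <= Var A a b.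
Proof. intros. eapply Rle_trans; [|apply (Var_ge A a b 1 (p2pt a b)); auto; apply p2pt_part; auto].
  apply varsum_nonneg. Qed.

Lemma Var_abs A a b : 0 <= a -> a <= b -> b <= 1 -> bounded_variation01 A -> Rabs (A b - A a) <= Var A a b.
Proof. intros. rewrite <- varsum_p2pt. apply Var_ge; auto. apply p2pt_part; auto. Qed.

Lemma Var_aa A a : 0 <= a <= 1 -> bounded_variation01 A -> Var A a a = 0.
Proof. intros Ha HA. apply Rle_antisym; [|apply Var_nonneg; auto; lra].
  apply Var_le; try lra; auto. intros n p Hp. unfold varsum. rewrite (rsum_ext n _ (fun _ => 0)).
  rewrite rsum_zero; lra. intros k Hk. pose proof (part_in a a n p Hp k ltac:(lia)).
  pose proof (part_in a a n p Hp (S k) ltac:(lia)). replace (p (S k)) with (p k) by lra.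
  replace (A (p k) - A (p k)) with 0 by ring. apply Rabs_R0. Qed.

Lemma clamp_term (A : R -> R) b p q : p <= q ->
  Rabs (A q - A p) <= Rabs (A (Rmin q b) - A (Rmin p b)) + Rabs (A (Rmax q b) - A (Rmax p b)).
Proof. intros Hpq. destruct (Rle_dec q b); destruct (Rle_dec p b).
  - rewrite (Rmin_left q b), (Rmin_left p b), (Rmax_right q b), (Rmax_right p b) by lra. rabs.
  - lra.
  - rewrite (Rmin_right q b), (Rmin_left p b), (Rmax_left q b), (Rmax_right p b) by lra. rabs.
  - rewrite (Rmin_right q b), (Rmin_right p b), (Rmax_left q b), (Rmax_left p b) by lra. rabs. Qed.

Lemma clamp_part_min a b c n p : a <= b <= c -> is_partition a c n p -> is_partition a b n (fun k => Rmin (p k) b).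
Proof. intros Hb [H0 [Hn Hm]]. split; [|split].
  - rewrite H0. apply Rmin_left; lra.
  - rewrite Hn. apply Rmin_right; lra.
  - intros k Hk. specialize (Hm k Hk). unfold Rmin. destruct Rle_dec; destruct Rle_dec; lra. Qed.

Lemma clamp_part_max a b c n p : a <= b <= c -> is_partition a c n p -> is_partition b c n (fun k => Rmax (p k) b).
Proof. intros Hb [H0 [Hn Hm]]. split; [|split].
  - rewrite H0. apply Rmax_right; lra.
  - rewrite Hn. apply Rmax_left; lra.
  - intros k Hk. specialize (Hm k Hk). unfold Rmax. destruct Rle_dec; destruct Rle_dec; lra. Qed.

Lemma varsum_clamp A a b c n p : is_partition a c n p ->
  varsum A n p <= varsum A n (fun k => Rmin (p k) b) + varsum A n (fun k => Rmax (p k) b).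
Proof. intros [_ [_ Hm]]. unfold varsum. rewrite <- rsum_plus. apply rsum_le. intros k Hk.
  apply clamp_term. auto. Qed.

Lemma Var_add A a b c : 0 <= a -> a <= b -> b <= c -> c <= 1 -> bounded_variation01 A ->
  Var A a c = Var A a b + Var A b c.
Proof. intros Ha Hab Hbc Hc HA. apply Rle_antisym.
  - apply Var_le; auto; try lra. intros n p Hp. eapply Rle_trans; [apply (varsum_clamp A a b c n p Hp)|].
    apply Rplus_le_compat; apply Var_ge; auto; try lra.
    apply (clamp_part_min a b c); auto. apply (clamp_part_max a b c); auto.
  - apply Rle_plus_epsilon. intros e He.
    destruct (Var_approx A a b (e/2)) as [n1 [p1 [Hp1 H1]]]; auto; try lra.
    destruct (Var_approx A b c (e/2)) as [n2 [p2 [Hp2 H2]]]; auto; try lra.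
    pose proof (Var_ge A a c _ _ Ha Hc HA (pcat_part _ _ _ _ _ _ _ Hp1 Hp2)).
    rewrite (varsum_cat A a b c _ _ _ _ Hp1 Hp2) in H. lra. Qed.

Lemma varsum_two A n (q : nat -> R) u v : (forall k, (k < n)%nat -> q k <= q (S k)) ->
  (forall k, (k <= n)%nat -> q k = u \/ q k = v) -> varsum A n q = Rabs (A (q n) - A (q O)).
Proof. intros Hm Hv. assert (Hmon : forall k, (k <= n)%nat -> q O <= q k).
  { induction k; intros; [lra|]. pose proof (Hm k ltac:(lia)). specialize (IHk ltac:(lia)). lra. }
  induction n. unfold varsum; simpl. replace (A (q O) - A (q O)) with 0 by ring. rewrite Rabs_R0; auto.
  unfold varsum in *. simpl. rewrite IHn; try (intros; apply Hm || apply Hv || apply Hmon; lia).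
  pose proof (Hm n ltac:(lia)). pose proof (Hmon n ltac:(lia)).
  destruct (Req_dec (q (S n)) (q n)) as [E|E]. rewrite E. replace (A (q n) - A (q n)) with 0 by ring. rewrite Rabs_R0. ring.
  assert (Hlt : q n < q (S n)) by (destruct (Rle_lt_or_eq_dec _ _ H); auto; congruence).
  assert (E0 : q O = q n) by (destruct (Hv (S n) ltac:(lia)), (Hv n ltac:(lia)), (Hv O ltac:(lia)); lra).
  rewrite E0. replace (A (q n) - A (q n)) with 0 by ring. rewrite Rabs_R0. ring. Qed.

Lemma finite_gap n (p : nat -> R) c : exists eta, 0 < eta /\ forall k, (k <= n)%nat -> c < p k -> c + eta <= p k.
Proof. induction n.
  - destruct (Rlt_dec c (p O)). exists (p O - c). split; [lra|]. intros k Hk Hc. assert (k = O) by lia. subst; lra.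
    exists 1. split; [lra|]. intros k Hk Hc. assert (k = O) by lia. subst; lra.
  - destruct IHn as [eta [He H]]. destruct (Rlt_dec c (p (S n))).
    + exists (Rmin eta (p (S n) - c)). split. apply Rmin_glb_lt; lra. intros k Hk Hc.
      pose proof (Rmin_l eta (p (S n) - c)). pose proof (Rmin_r eta (p (S n) - c)).
      destruct (Nat.eq_dec k (S n)). subst; lra. specialize (H k ltac:(lia) Hc). lra.
    + exists eta. split; auto. intros k Hk Hc. destruct (Nat.eq_dec k (S n)). subst; lra. apply H; auto; lia. Qed.

Lemma var_right A c e : cont01 A -> bounded_variation01 A -> 0 <= c <= 1 -> 0 < e ->
  exists dl, 0 < dl /\ forall x, c <= x <= 1 -> x - c < dl -> Var A c x < e.
Proof. intros HAc HA Hc He. destruct (Req_dec c 1) as [E|Hc1].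
  { exists 1. split; [lra|]. intros x Hx _. replace x with c by lra. rewrite Var_aa; auto. }
  destruct (Var_approx A c 1 (e/2)) as [n [p [Hp Hs]]]; try lra; auto.
  destruct (finite_gap n p c) as [eta [Heta Hg]].
  destruct (HAc c Hc (e/2) ltac:(lra)) as [dA [HdA HA']].
  set (y := c + Rmin eta dA / 2). pose proof (Rmin_l eta dA). pose proof (Rmin_r eta dA).
  assert (0 < Rmin eta dA) by (apply Rmin_glb_lt; auto).
  assert (Hy1 : y <= 1). { destruct Hp as [_ [Hn _]]. specialize (Hg n (le_n n)). rewrite Hn in Hg. unfold y. lra. }
  assert (Hcy : c < y) by (unfold y; lra).
  pose proof (varsum_clamp A c y 1 n p Hp) as Hcl.
  rewrite (varsum_two A n (fun k => Rmin (p k) y) c y) in Hcl.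
  2: { intros k Hk; apply (proj2 (proj2 (clamp_part_min c y 1 n p ltac:(lra) Hp))); auto. }
  2: { intros k Hk. pose proof (part_in c 1 n p Hp k Hk). destruct (Req_dec (p k) c) as [Epk|Epk].
       left. rewrite Epk. apply Rmin_left; lra. right. apply Rmin_right. specialize (Hg k Hk ltac:(lra)). unfold y; lra. }
  pose proof Hp as Hpp. destruct Hp as [Hp0 [Hpn Hmn]]. rewrite Hp0, Hpn in Hcl. rewrite (Rmin_left c y), (Rmin_right 1 y) in Hcl by lra.
  assert (Rabs (A y - A c) < e/2) by (apply HA'; try lra; unfold y; rabs).
  pose proof (Var_ge A y 1 n (fun k => Rmax (p k) y) ltac:(lra) ltac:(lra) HA (clamp_part_max c y 1 n p ltac:(lra) Hpp)).
  rewrite (Var_add A c y 1) in Hs; try lra; auto.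
  exists (y - c). split; [lra|]. intros x Hx Hxc.
  pose proof (Var_add A c x y ltac:(lra) ltac:(lra) ltac:(lra) ltac:(lra) HA).
  pose proof (Var_nonneg A x y ltac:(lra) ltac:(lra) ltac:(lra) HA). lra. Qed.

Lemma var_left A c e : cont01 A -> bounded_variation01 A -> 0 <= c <= 1 -> 0 < e ->
  exists dl, 0 < dl /\ forall x, 0 <= x <= c -> c - x < dl -> Var A x c < e.
Proof. intros HAc HA Hc He. destruct (Req_dec c 0) as [E|Hc1].
  { exists 1. split; [lra|]. intros x Hx _. replace x with c by lra. rewrite Var_aa; auto. }
  destruct (Var_approx A 0 c (e/2)) as [n [p [Hp Hs]]]; try lra; auto.
  destruct (finite_gap n (fun k => - p k) (- c)) as [eta [Heta Hg]].
  destruct (HAc c Hc (e/2) ltac:(lra)) as [dA [HdA HA']].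
  set (y := c - Rmin eta dA / 2). pose proof (Rmin_l eta dA). pose proof (Rmin_r eta dA).
  assert (0 < Rmin eta dA) by (apply Rmin_glb_lt; auto).
  assert (Hy1 : 0 <= y). { destruct Hp as [Hp0 _]. specialize (Hg O (le_0_n n)). simpl in Hg. rewrite Hp0 in Hg. unfold y. lra. }
  assert (Hcy : y < c) by (unfold y; lra).
  pose proof (varsum_clamp A 0 y c n p Hp) as Hcl.
  rewrite (varsum_two A n (fun k => Rmax (p k) y) y c) in Hcl.
  2: { intros k Hk; apply (proj2 (proj2 (clamp_part_max 0 y c n p ltac:(lra) Hp))); auto. }
  2: { intros k Hk. pose proof (part_in 0 c n p Hp k Hk). destruct (Req_dec (p k) c) as [Epk|Epk].
       right. rewrite Epk. apply Rmax_left; lra. left. apply Rmax_right. specialize (Hg k Hk ltac:(lra)). unfold y; lra. }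
  pose proof Hp as Hpp. destruct Hp as [Hp0 [Hpn Hmn]]. rewrite Hp0, Hpn in Hcl.
  rewrite (Rmax_right 0 y), (Rmax_left c y) in Hcl by lra.
  assert (Rabs (A c - A y) < e/2).
  { assert (Rabs (A y - A c) < e/2) by (apply HA'; try lra; unfold y; rabs). rewrite Rabs_minus_sym; auto. }
  pose proof (Var_ge A 0 y n (fun k => Rmin (p k) y) ltac:(lra) ltac:(lra) HA (clamp_part_min 0 y c n p ltac:(lra) Hpp)).
  rewrite (Var_add A 0 y c) in Hs; try lra; auto.
  exists (c - y). split; [lra|]. intros x Hx Hxc.
  pose proof (Var_add A y x c ltac:(lra) ltac:(lra) ltac:(lra) ltac:(lra) HA).
  pose proof (Var_nonneg A y x ltac:(lra) ltac:(lra) ltac:(lra) HA). lra. Qed.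

Lemma Var_cont A : cont01 A -> bounded_variation01 A -> cont01 (fun x => Var A 0 x).
Proof. intros HAc HA c Hc e He. destruct (var_right A c e HAc HA Hc He) as [d1 [Hd1 H1]].
  destruct (var_left A c e HAc HA Hc He) as [d2 [Hd2 H2]]. exists (Rmin d1 d2). split. apply Rmin_glb_lt; auto.
  intros s Hs Hsc. pose proof (Rmin_l d1 d2). pose proof (Rmin_r d1 d2). destruct (Rle_dec c s).
  - rewrite (Var_add A 0 c s) by (auto; lra). specialize (H1 s ltac:(lra) ltac:(rabs)).
    pose proof (Var_nonneg A c s ltac:(lra) ltac:(lra) ltac:(lra) HA). rabs.
  - rewrite (Var_add A 0 s c) by (auto; lra). specialize (H2 s ltac:(lra) ltac:(rabs)).
    pose proof (Var_nonneg A s c ltac:(lra) ltac:(lra) ltac:(lra) HA). rabs. Qed.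


Lemma rsum_const n c : rsum n (fun _ => c) = INR n * c.
Proof. induction n. simpl; ring. rewrite S_INR. simpl. rewrite IHn. ring. Qed.

Lemma RSint_ex h A a b : exists x, (exists I, is_RS_integral h A a b I) -> is_RS_integral h A a b x.
Proof. destruct (classic (exists I, is_RS_integral h A a b I)) as [[I HI]|H].
  exists I; auto. exists 0. intros H'. exfalso; auto. Qed.

Definition RSint h A a b : R := proj1_sig (constructive_indefinite_description _ (RSint_ex h A a b)).

Lemma RSint_spec h A a b I : is_RS_integral h A a b I -> is_RS_integral h A a b (RSint h A a b).
Proof. intros HI. unfold RSint. destruct constructive_indefinite_description as [x Hx]. simpl. apply Hx. eauto. Qed.

Lemma RSint_eq h A a b I : a <= b -> is_RS_integral h A a b I -> RSint h A a b = I.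
Proof. intros Hab HI. apply (RS_unique h A a b); auto. apply (RSint_spec h A a b I HI). Qed.

Lemma RSint_ext h1 h2 A a b I : a <= b -> is_RS_integral h1 A a b I ->
  (forall s, a <= s <= b -> h1 s = h2 s) -> RSint h1 A a b = RSint h2 A a b.
Proof. intros Hab HI He. rewrite (RSint_eq h1 A a b I); auto.
  rewrite (RSint_eq h2 A a b I); auto. apply (RS_ext h1); auto. Qed.

Lemma RS_point h A a : is_RS_integral h A a a 0.
Proof. intros e He. exists 1. split; [lra|]. intros n p xi Hp _ _. unfold RS_sum.
  rewrite (rsum_ext n _ (fun _ => 0)). rewrite rsum_zero. rewrite Rminus_0_r, Rabs_R0; auto.
  intros k Hk. pose proof (part_in a a n p Hp k ltac:(lia)). pose proof (part_in a a n p Hp (S k) ltac:(lia)).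
  replace (p (S k)) with (p k) by lra. ring. Qed.

Lemma RS_exists01 h A t : cont01 h -> cont01 A -> bounded_variation01 A -> 0 <= t <= 1 ->
  exists I, is_RS_integral h A 0 t I.
Proof. intros Hh HAc HA Ht. apply (RS_exists h A 0 t (Var A 0 t)). lra.
  apply ucon_sub; try lra. apply uc_of_cont01; auto.
  apply ucon_sub; try lra. apply uc_of_cont01; auto.
  intros n p Hp. apply Var_ge; auto; lra. Qed.

Lemma cont01_rsum d (F : nat -> R -> R) : (forall i, (i < d)%nat -> cont01 (F i)) ->
  cont01 (fun t => rsum d (fun i => F i t)).
Proof. induction d; intros H t Ht e He; simpl.
  - exists 1. split; [lra|]. intros. rewrite Rminus_0_r, Rabs_R0; auto.
  - destruct (IHd ltac:(intros; apply H; lia) t Ht (e/2) ltac:(lra)) as [d1 [Hd1 H1]].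
    destruct (H d ltac:(lia) t Ht (e/2) ltac:(lra)) as [d2 [Hd2 H2]].
    exists (Rmin d1 d2). split. apply Rmin_glb_lt; auto. intros s Hs Hst.
    pose proof (Rmin_l d1 d2). pose proof (Rmin_r d1 d2).
    specialize (H1 s Hs ltac:(lra)). specialize (H2 s Hs ltac:(lra)). simpl in H1. rabs. Qed.

Lemma finite_delta d (P : nat -> R -> Prop) : (forall i dl dl', 0 < dl' <= dl -> P i dl -> P i dl') ->
  (forall i, (i < d)%nat -> exists dl, 0 < dl /\ P i dl) -> exists dl, 0 < dl /\ forall i, (i < d)%nat -> P i dl.
Proof. intros Hm. induction d; intros H.
  - exists 1. split; [lra|]. intros; lia.
  - destruct IHd as [d1 [Hd1 H1]]. intros; apply H; lia. destruct (H d ltac:(lia)) as [d2 [Hd2 H2]].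
    exists (Rmin d1 d2). pose proof (Rmin_l d1 d2). pose proof (Rmin_r d1 d2).
    assert (0 < Rmin d1 d2) by (apply Rmin_glb_lt; auto). split; auto.
    intros i Hi. destruct (Nat.eq_dec i d). subst. apply (Hm d d2); auto; lra.
    apply (Hm i d1); [lra| apply H1; lia]. Qed.

Definition Wf d (A : nat -> R -> R) (s : R) : R := rsum d (fun i => Var (A i) 0 s).

Lemma mesh_mono n p dl dl' : dl' <= dl -> mesh_lt n p dl' -> mesh_lt n p dl.
Proof. intros H Hm k Hk. specialize (Hm k Hk). lra. Qed.

Lemma Wf_incr d A u v : (forall i, (i < d)%nat -> bounded_variation01 (A i)) -> 0 <= u <= v -> v <= 1 ->
  rsum d (fun i => Rabs (A i v - A i u)) <= Wf d A v - Wf d A u.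
Proof. intros HA Huv Hv. unfold Wf. rewrite <- rsum_minus. apply rsum_le. intros i Hi.
  rewrite (Var_add (A i) 0 u v) by (auto; lra). ring_simplify. apply Var_abs; auto; lra. Qed.

Lemma Wf_mono d A u v : (forall i, (i < d)%nat -> bounded_variation01 (A i)) -> 0 <= u <= v -> v <= 1 ->
  Wf d A u <= Wf d A v.
Proof. intros HA Huv Hv. pose proof (Wf_incr d A u v HA Huv Hv).
  assert (0 <= rsum d (fun i => Rabs (A i v - A i u))) by (apply rsum_nonneg; intros; apply Rabs_pos). lra. Qed.

Lemma Wf_0 d A : (forall i, (i < d)%nat -> bounded_variation01 (A i)) -> Wf d A 0 = 0.
Proof. intros HA. unfold Wf. rewrite (rsum_ext d _ (fun _ => 0)). apply rsum_zero.
  intros i Hi. apply Var_aa; auto; lra. Qed.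

Lemma Wf_cont d A : (forall i, (i < d)%nat -> cont01 (A i)) -> (forall i, (i < d)%nat -> bounded_variation01 (A i)) ->
  cont01 (Wf d A).
Proof. intros Hc HA. unfold Wf. apply (cont01_rsum d (fun i s => Var (A i) 0 s)). intros i Hi. apply Var_cont; auto. Qed.

Lemma int_bound d A (phi : nat -> R -> R) (I : nat -> R) (psi : R -> R) t :
  (forall i, (i < d)%nat -> bounded_variation01 (A i)) -> 0 <= t <= 1 ->
  (forall i, (i < d)%nat -> is_RS_integral (phi i) (A i) 0 t (I i)) ->
  (forall i s, (i < d)%nat -> 0 <= s <= t -> Rabs (phi i s) <= psi s) ->
  (forall s, 0 <= s <= t -> 0 <= psi s) ->
  forall e, 0 < e -> exists N, (0 < N)%nat /\
    rsum d (fun i => Rabs (I i)) <= rsum N (fun k => psi (unif 0 t N k) *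
       (Wf d A (unif 0 t N (S k)) - Wf d A (unif 0 t N k))) + e.
Proof. intros HA Ht HI Hphi Hpsi e He. set (e' := e / (INR d + 1)).
  assert (He' : 0 < e') by (unfold e'; apply Rdiv_lt_0_compat; auto; pose proof (pos_INR d); lra).
  destruct (finite_delta d (fun i dl => forall n p xi, is_partition 0 t n p -> mesh_lt n p dl ->
     is_tagging n p xi -> Rabs (RS_sum (phi i) (A i) n p xi - I i) < e')) as [dl [Hdl Hd]].
  { intros i dl dl' Hdl' H n p xi Hp Hm Htg. apply H; auto. apply (mesh_mono n p dl dl'); auto; lra. }
  { intros i Hi. apply (HI i Hi e' He'). }
  destruct (fine_part 0 t dl ltac:(lra) Hdl) as [N [HN [Hp [Hm Htg]]]].
  exists N. split; auto.
  assert (Hs : forall i, (i < d)%nat -> Rabs (I i) <= rsum N (fun k => psi (unif 0 t N k) *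
     Rabs (A i (unif 0 t N (S k)) - A i (unif 0 t N k))) + e').
  { intros i Hi. specialize (Hd i Hi N _ _ Hp Hm Htg). unfold RS_sum in Hd.
    assert (Rabs (rsum N (fun k => phi i (unif 0 t N k) * (A i (unif 0 t N (S k)) - A i (unif 0 t N k)))) <=
      rsum N (fun k => psi (unif 0 t N k) * Rabs (A i (unif 0 t N (S k)) - A i (unif 0 t N k)))).
    { eapply Rle_trans; [apply rsum_abs|]. apply rsum_le. intros k Hk. rewrite Rabs_mult.
      apply Rmult_le_compat_r. apply Rabs_pos. apply Hphi; auto. apply (part_in 0 t N _ Hp k); lia. }
    rabs. }
  eapply Rle_trans. apply (rsum_le d _ (fun i => rsum N (fun k => psi (unif 0 t N k) *
     Rabs (A i (unif 0 t N (S k)) - A i (unif 0 t N k))) + e')). auto.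
  rewrite rsum_plus. rewrite rsum_swap.
  assert (rsum d (fun _ => e') <= e).
  { replace (rsum d (fun _ => e')) with (INR d * e').
    unfold e'. apply Rmult_le_reg_r with (INR d + 1). pose proof (pos_INR d); lra.
    replace (INR d * (e / (INR d + 1)) * (INR d + 1)) with (INR d * e) by (field; pose proof (pos_INR d); lra). nra.
    symmetry; apply rsum_const. }
  assert (rsum N (fun k => rsum d (fun i => psi (unif 0 t N k) * Rabs (A i (unif 0 t N (S k)) - A i (unif 0 t N k))))
    <= rsum N (fun k => psi (unif 0 t N k) * (Wf d A (unif 0 t N (S k)) - Wf d A (unif 0 t N k)))).
  { apply rsum_le. intros k Hk. rewrite rsum_scal. apply Rmult_le_compat_l.
    apply Hpsi. apply (part_in 0 t N _ Hp k); lia.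
    apply Wf_incr; auto. pose proof (part_in 0 t N _ Hp k ltac:(lia)). destruct Hp as [_ [_ Hmo]].
    specialize (Hmo k Hk). lra. pose proof (part_in 0 t N _ Hp (S k) ltac:(lia)). lra. }
  lra.
Qed.


Lemma tele_exp c N (w : nat -> R) : 0 <= c -> (forall k, (k < N)%nat -> w k <= w (S k)) ->
  rsum N (fun k => c * exp (c * w k) * (w (S k) - w k)) <= exp (c * w N) - exp (c * w O).
Proof. intros Hc Hw. rewrite <- (rsum_tele N (fun k => exp (c * w k))). apply rsum_le. intros k Hk.
  replace (c * w (S k)) with (c * w k + c * (w (S k) - w k)) by ring. rewrite exp_plus.
  pose proof (exp_ineq1_le (c * (w (S k) - w k))). pose proof (exp_pos (c * w k)). nra. Qed.

Lemma pow_ineq j x y : 0 <= x <= y -> INR (S j) * x ^ j * (y - x) <= y ^ (S j) - x ^ (S j).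
Proof. intros Hxy. induction j.
  - simpl. lra.
  - rewrite (S_INR (S j)), (S_INR j). rewrite S_INR in IHj. simpl pow in *.
    assert (Hxj : 0 <= x ^ j) by (apply pow_le; lra).
    set (Xj := x ^ j) in *. set (Y := y ^ j) in *.
    assert (H1 : y * (y * Y) >= y * (x * Xj + (INR j + 1) * Xj * (y - x))) by (apply Rmult_ge_compat_l; lra).
    assert (H2 : (INR j + 1) * y * Xj * (y - x) >= (INR j + 1) * x * Xj * (y - x)).
    { pose proof (pos_INR j). assert (0 <= (INR j + 1) * Xj * (y - x)) by (apply Rmult_le_pos; [apply Rmult_le_pos|]; lra).
      nra. }
    nra. Qed.

Lemma tele_pow j N (w : nat -> R) : 0 <= w O -> (forall k, (k < N)%nat -> w k <= w (S k)) ->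
  rsum N (fun k => w k ^ j * (w (S k) - w k)) <= (w N ^ (S j) - w O ^ (S j)) / INR (S j).
Proof. intros H0 Hw. assert (Hpos : forall k, (k <= N)%nat -> 0 <= w k).
  { induction k; intros; auto. specialize (Hw k ltac:(lia)). specialize (IHk ltac:(lia)). lra. }
  assert (HS : 0 < INR (S j)) by (apply lt_0_INR; lia).
  replace ((w N ^ S j - w O ^ S j) / INR (S j)) with (rsum N (fun k => (w (S k) ^ S j - w k ^ S j) / INR (S j))).
  2: { unfold Rdiv. rewrite (rsum_ext N _ (fun k => / INR (S j) * (w (S k) ^ S j - w k ^ S j))) by (intros; ring).
       rewrite rsum_scal, (rsum_tele N (fun k => w k ^ S j)). ring. }
  apply rsum_le. intros k Hk. apply Rmult_le_reg_r with (INR (S j)); auto.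
  replace ((w (S k) ^ S j - w k ^ S j) / INR (S j) * INR (S j)) with (w (S k) ^ S j - w k ^ S j) by (field; lra).
  pose proof (pow_ineq j (w k) (w (S k)) ltac:(split; [apply Hpos; lia| apply Hw; auto])). nra. Qed.

Lemma int_diff phi A t t' I1 I2 K : 0 <= t' <= t -> t <= 1 -> bounded_variation01 A ->
  is_RS_integral phi A 0 t I1 -> is_RS_integral phi A 0 t' I2 ->
  (forall s, 0 <= s <= t -> Rabs (phi s) <= K) -> Rabs (I1 - I2) <= K * Var A t' t.
Proof. intros Ht' Ht HA H1 H2 HK. apply Rle_plus_epsilon. intros e He.
  destruct (H1 (e/2) ltac:(lra)) as [d1 [Hd1 H1']]. destruct (H2 (e/2) ltac:(lra)) as [d2 [Hd2 H2']].
  set (dl := Rmin d1 d2). assert (0 < dl) by (apply Rmin_glb_lt; auto).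
  pose proof (Rmin_l d1 d2). pose proof (Rmin_r d1 d2).
  destruct (fine_part 0 t' dl ltac:(lra) H) as [n1 [_ [Hp1 [Hm1 _]]]].
  destruct (fine_part t' t dl ltac:(lra) H) as [n2 [_ [Hp2 [Hm2 _]]]].
  set (p1 := unif 0 t' n1) in *. set (p2 := unif t' t n2) in *.
  assert (Hj : p1 n1 = p2 O) by (destruct Hp1 as [_ [E1 _]]; destruct Hp2 as [E2 _]; congruence).
  pose proof (pcat_part _ _ _ _ _ _ _ Hp1 Hp2) as Hp.
  pose proof (pcat_mesh n1 n2 p1 p2 dl Hj Hm1 Hm2) as Hm.
  set (q := pcat n1 p1 p2) in *.
  assert (Htq : is_tagging (n1 + n2) q q) by (apply tag_left; apply Hp).
  specialize (H1' _ _ _ Hp ltac:(apply (mesh_mono _ _ d1 dl); auto) Htq).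
  assert (Htp1 : is_tagging n1 p1 p1) by (apply tag_left; apply Hp1).
  specialize (H2' _ _ _ Hp1 ltac:(apply (mesh_mono _ _ d2 dl); auto) Htp1).
  unfold RS_sum in *. unfold q in H1'.
  rewrite (pcat_sum n1 n2 p1 p2 (fun u v => phi v * (A u - A v)) Hj) in H1'.
  assert (Rabs (rsum n2 (fun k => phi (p2 k) * (A (p2 (S k)) - A (p2 k)))) <= K * Var A t' t).
  { eapply Rle_trans; [apply rsum_abs|]. eapply Rle_trans.
    apply (rsum_le n2 _ (fun k => K * Rabs (A (p2 (S k)) - A (p2 k)))).
    intros k Hk. rewrite Rabs_mult. apply Rmult_le_compat_r. apply Rabs_pos. apply HK.
    pose proof (part_in _ _ _ _ Hp2 k ltac:(lia)). lra.
    rewrite rsum_scal. apply Rmult_le_compat_l. pose proof (HK 0 ltac:(lra)). pose proof (Rabs_pos (phi 0)). lra.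
    apply Var_ge; auto; lra. }
  rabs. Qed.

Lemma int_cont phi A : cont01 phi -> cont01 A -> bounded_variation01 A -> cont01 (fun t => RSint phi A 0 t).
Proof. intros Hphi HAc HA t Ht e He. destruct (cont01_bounded phi Hphi) as [K HK].
  assert (HK0 : 0 <= K) by (pose proof (HK 0 ltac:(lra)); pose proof (Rabs_pos (phi 0)); lra).
  destruct (Var_cont A HAc HA t Ht (e / (K + 1))) as [dl [Hdl HV]]. apply Rdiv_lt_0_compat; lra.
  exists dl. split; auto. intros s Hs Hst. specialize (HV s Hs Hst). simpl in HV.
  destruct (RS_exists01 phi A t Hphi HAc HA Ht) as [It HIt].
  destruct (RS_exists01 phi A s Hphi HAc HA Hs) as [Is HIs].
  rewrite (RSint_eq phi A 0 t It), (RSint_eq phi A 0 s Is); try lra; auto.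
  assert (Hq : e / (K + 1) * (K + 1) = e) by (field; lra).
  destruct (Rle_dec s t).
  - pose proof (int_diff phi A t s It Is K ltac:(lra) ltac:(lra) HA HIt HIs ltac:(intros; apply HK; lra)).
    rewrite (Var_add A 0 s t) in HV by (auto; lra).
    pose proof (Var_nonneg A s t ltac:(lra) ltac:(lra) ltac:(lra) HA).
    assert (K * Var A s t <= K * (e / (K + 1))) by (apply Rmult_le_compat_l; auto; rabs).
    assert (K * (e / (K+1)) < e) by nra. rabs.
  - pose proof (int_diff phi A s t Is It K ltac:(lra) ltac:(lra) HA HIs HIt ltac:(intros; apply HK; lra)).
    rewrite (Var_add A 0 t s) in HV by (auto; lra).
    pose proof (Var_nonneg A t s ltac:(lra) ltac:(lra) ltac:(lra) HA).
    assert (K * Var A t s <= K * (e / (K + 1))) by (apply Rmult_le_compat_l; auto; rabs).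
    assert (K * (e / (K+1)) < e) by nra. rabs. Qed.


Definition incr (psi : nat -> nat) := forall k, (psi k < psi (S k))%nat.
Definition cauchy (v : nat -> R) := forall e, 0 < e -> exists N, forall m n, (N <= m)%nat -> (N <= n)%nat -> Rabs (v m - v n) < e.

Lemma incr_lt psi : incr psi -> forall k l, (k < l)%nat -> (psi k < psi l)%nat.
Proof. intros H k l Hkl. induction Hkl. apply H. specialize (H m). lia. Qed.

Lemma incr_ge psi : incr psi -> forall k, (k <= psi k)%nat.
Proof. intros H k. induction k. lia. specialize (H k). lia. Qed.

Lemma incr_comp p q : incr p -> incr q -> incr (fun k => p (q k)).
Proof. intros Hp Hq k. apply incr_lt; auto. Qed.

Lemma cauchy_sub v psi : cauchy v -> incr psi -> cauchy (fun k => v (psi k)).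
Proof. intros H Hp e He. destruct (H e He) as [N HN]. exists N. intros m n Hm Hn.
  pose proof (incr_ge psi Hp m). pose proof (incr_ge psi Hp n). apply HN; lia. Qed.

Lemma clusterM (a : nat -> R) M : (forall n, -M <= a n <= M) ->
  exists l, forall e, 0 < e -> forall N, exists p, (N <= p)%nat /\ Rabs (a p - l) < e.
Proof. intros Ha. destruct (Bolzano_Weierstrass a (fun c => -M <= c <= M) (compact_P3 (-M) M) Ha) as [l Hl].
  exists l. apply valadh_close; auto. Qed.

Fixpoint build (pick : nat -> nat -> nat) (k : nat) : nat :=
  match k with O => pick O O | S k' => pick k (S (build pick k')) end.

Lemma extract1 (a : nat -> R) M : (forall n, Rabs (a n) <= M) -> exists psi, incr psi /\ cauchy (fun k => a (psi k)).
Proof. intros Ha. destruct (clusterM a M) as [l Hl]. intros n; specialize (Ha n); rabs.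
  assert (Hp : forall m N, {p | (N <= p)%nat /\ Rabs (a p - l) < eps_n m}).
  { intros m N. apply constructive_indefinite_description. apply Hl. apply eps_n_pos. }
  set (pick := fun m N => proj1_sig (Hp m N)).
  assert (Hpick : forall m N, (N <= pick m N)%nat /\ Rabs (a (pick m N) - l) < eps_n m) by (intros; apply (proj2_sig (Hp m N))).
  exists (build pick). split.
  - intros k. simpl. destruct (Hpick (S k) (S (build pick k))). lia.
  - assert (Hc : forall k, Rabs (a (build pick k) - l) < eps_n k) by (destruct k; simpl; apply Hpick).
    intros e He. destruct (eps_n_small (e/2) ltac:(lra)) as [N HN]. exists N. intros m n Hm Hn.
    pose proof (Hc m). pose proof (Hc n). pose proof (HN m Hm). pose proof (HN n Hn). rabs. Qed.

Lemma extractL (u : nat -> R -> R) M (x : nat -> R) L : (forall n j, (j < L)%nat -> Rabs (u n (x j)) <= M) ->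
  exists psi, incr psi /\ forall j, (j < L)%nat -> cauchy (fun k => u (psi k) (x j)).
Proof. induction L; intros Hb.
  - exists (fun k => k). split. intros k; lia. intros; lia.
  - destruct IHL as [p1 [Hi1 Hc1]]. intros; apply Hb; lia.
    destruct (extract1 (fun n => u (p1 n) (x L)) M) as [p2 [Hi2 Hc2]]. intros; apply Hb; lia.
    exists (fun k => p1 (p2 k)). split. apply incr_comp; auto.
    intros j Hj. destruct (Nat.eq_dec j L). subst; auto.
    apply (cauchy_sub (fun k => u (p1 k) (x j)) p2); auto. apply Hc1; lia. Qed.

Definition xm (m j : nat) : R := INR j / INR (S m).

Fixpoint Phi (ext : nat -> (nat -> nat) -> (nat -> nat)) (m : nat) : nat -> nat :=
  match m with
  | O => ext O (fun n => n)
  | S m' => fun k => Phi ext m' (ext m (Phi ext m') k)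
  end.

Lemma net_point m t : 0 <= t <= 1 -> exists j, (j <= S m)%nat /\ Rabs (t - xm m j) <= / INR (S m).
Proof. intros Ht. assert (HS : 0 < INR (S m)) by (apply lt_0_INR; lia).
  assert (H : forall L, t <= INR L / INR (S m) -> exists j, (j <= L)%nat /\ Rabs (t - xm m j) <= / INR (S m)).
  { induction L; intros HL.
    - exists O. split; auto. unfold xm. simpl in *. unfold Rdiv in *. rewrite Rmult_0_l in *.
      replace t with 0 by lra. rewrite Rminus_0_r, Rabs_R0. left; apply Rinv_0_lt_compat; auto.
    - destruct (Rle_dec t (INR L / INR (S m))). destruct (IHL r) as [j [Hj Hd]]. exists j; split; auto.
      exists (S L). split; auto. unfold xm in *. rewrite !S_INR in *.
      assert (INR L / (INR m + 1) < t) by lra.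
      assert ((INR L + 1) / (INR m + 1) = INR L / (INR m + 1) + / (INR m + 1)) by (field; lra).
      pose proof (Rinv_0_lt_compat _ HS). rabs. }
  apply H. replace (INR (S m) / INR (S m)) with 1 by (field; lra). lra. Qed.

Lemma finite_N L (P : nat -> nat -> Prop) : (forall j N N', (N <= N')%nat -> P j N -> P j N') ->
  (forall j, (j < L)%nat -> exists N, P j N) -> exists N, forall j, (j < L)%nat -> P j N.
Proof. intros Hm. induction L; intros H. exists O; intros; lia.
  destruct IHL as [N1 H1]. intros; apply H; lia. destruct (H L ltac:(lia)) as [N2 H2].
  exists (N1 + N2)%nat. intros j Hj. destruct (Nat.eq_dec j L). subst. apply (Hm L N2); auto; lia.
  apply (Hm j N1); [lia|]. apply H1; lia. Qed.

Lemma limv_ex (v : nat -> R) : exists l, Cauchy_crit v -> Un_cv v l.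
Proof. destruct (classic (Cauchy_crit v)) as [H|H]. destruct (R_complete v H) as [l Hl]. exists l; auto.
  exists 0; intros; contradiction. Qed.

Definition limv (v : nat -> R) : R := proj1_sig (constructive_indefinite_description _ (limv_ex v)).

Lemma limv_spec v : Cauchy_crit v -> Un_cv v (limv v).
Proof. unfold limv. destruct constructive_indefinite_description. simpl; auto. Qed.

Lemma arzela (u : nat -> R -> R) M : (forall n t, 0 <= t <= 1 -> Rabs (u n t) <= M) ->
  (forall e, 0 < e -> exists dl, 0 < dl /\ forall n s t, 0 <= s <= 1 -> 0 <= t <= 1 -> Rabs (s - t) < dl ->
     Rabs (u n s - u n t) < e) ->
  exists (sigma : nat -> nat) (B : R -> R), incr sigma /\
    forall e, 0 < e -> exists N, forall k t, (N <= k)%nat -> 0 <= t <= 1 -> Rabs (u (sigma k) t - B t) < e.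
Proof. intros Hb Heq.
  assert (Hext : forall m (phi : nat -> nat), {psi | incr psi /\ forall j, (j < S (S m))%nat ->
     cauchy (fun k => u (phi (psi k)) (xm m j))}).
  { intros m phi. apply constructive_indefinite_description.
    apply (extractL (fun n => u (phi n)) M (xm m) (S (S m))). intros n j Hj. apply Hb.
    unfold xm. assert (0 < INR (S m)) by (apply lt_0_INR; lia). split.
    apply div_nonneg; auto. apply pos_INR. apply Rmult_le_reg_r with (INR (S m)); auto.
    replace (INR j / INR (S m) * INR (S m)) with (INR j) by (field; lra). rewrite Rmult_1_l. apply le_INR; lia. }
  set (ext := fun m phi => proj1_sig (Hext m phi)).
  assert (Hex : forall m phi, incr (ext m phi) /\ forall j, (j < S (S m))%nat ->
     cauchy (fun k => u (phi (ext m phi k)) (xm m j))) by (intros; apply (proj2_sig (Hext m phi))).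
  assert (HPi : forall m, incr (Phi ext m)).
  { induction m; simpl. apply (proj1 (Hex 0%nat (fun n => n))). apply incr_comp; auto. apply (proj1 (Hex (S m) (Phi ext m))). }
  assert (HPc : forall m j, (j < S (S m))%nat -> cauchy (fun k => u (Phi ext m k) (xm m j))).
  { intros m j Hj. destruct m; simpl. apply (proj2 (Hex 0%nat (fun n => n))); auto. apply (proj2 (Hex (S m) (Phi ext m))); auto. }
  assert (Hsub : forall m dd k, exists r, (k <= r)%nat /\ Phi ext (m + dd) k = Phi ext m r).
  { intros m dd. induction dd; intros k. exists k. rewrite Nat.add_0_r. split; auto.
    rewrite Nat.add_succ_r. simpl. destruct (IHdd (ext (S (m + dd)) (Phi ext (m + dd)) k)) as [r [Hr Er]].
    exists r. split; auto. pose proof (incr_ge _ (proj1 (Hex (S (m + dd)) (Phi ext (m + dd)))) k). lia. }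
  set (sigma := fun k => Phi ext k k).
  assert (Hsig : incr sigma).
  { intros k. unfold sigma. simpl. apply incr_lt; [apply HPi|]. pose proof (incr_ge _ (proj1 (Hex (S k) (Phi ext k))) (S k)). lia. }
  assert (Hsc : forall m j, (j < S (S m))%nat -> cauchy (fun k => u (sigma k) (xm m j))).
  { intros m j Hj e He. destruct (HPc m j Hj e He) as [N HN]. exists (m + N)%nat. intros a b Ha Hb'.
    destruct (Hsub m (a - m)%nat a) as [ra [Hra Era]]. destruct (Hsub m (b - m)%nat b) as [rb [Hrb Erb]].
    unfold sigma. replace a with (m + (a - m))%nat at 1 by lia. replace b with (m + (b - m))%nat at 1 by lia.
    rewrite Era, Erb. apply HN; lia. }
  assert (Hunif : forall e, 0 < e -> exists N, forall a b t, (N <= a)%nat -> (N <= b)%nat -> 0 <= t <= 1 ->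
     Rabs (u (sigma a) t - u (sigma b) t) < e).
  { intros e He. destruct (Heq (e/3) ltac:(lra)) as [dl [Hdl Hd]].
    destruct (INR_unbounded (/ dl)) as [m Hm].
    assert (Hm' : / INR (S m) < dl).
    { rewrite S_INR. assert (0 < / dl) by (apply Rinv_0_lt_compat; auto).
      replace dl with (/ / dl) by (field; lra). apply Rinv_lt_contravar; nra. }
    destruct (finite_N (S (S m)) (fun j N => forall a b, (N <= a)%nat -> (N <= b)%nat ->
       Rabs (u (sigma a) (xm m j) - u (sigma b) (xm m j)) < e / 3)) as [N HN].
    { intros j N N' HNN H a b Ha Hb'. apply H; lia. }
    { intros j Hj. apply (Hsc m j Hj (e/3) ltac:(lra)). }
    exists N. intros a b t Ha Hb' Ht. destruct (net_point m t Ht) as [j [Hj Hjd]].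
    assert (Hxj : 0 <= xm m j <= 1).
    { unfold xm. assert (0 < INR (S m)) by (apply lt_0_INR; lia). split.
      apply div_nonneg; auto. apply pos_INR. apply Rmult_le_reg_r with (INR (S m)); auto.
      replace (INR j / INR (S m) * INR (S m)) with (INR j) by (field; lra). rewrite Rmult_1_l. apply le_INR; lia. }
    pose proof (HN j ltac:(lia) a b Ha Hb'). pose proof (Hd (sigma a) t (xm m j) Ht Hxj ltac:(lra)).
    pose proof (Hd (sigma b) t (xm m j) Ht Hxj ltac:(lra)). rabs. }
  exists sigma, (fun t => limv (fun k => u (sigma k) t)). split; auto.
  intros e He. destruct (Hunif (e/2) ltac:(lra)) as [N HN]. exists N. intros k t Hk Ht.
  assert (Hcc : Cauchy_crit (fun k => u (sigma k) t)).
  { intros e' He'. destruct (Hunif e' He') as [N' HN']. exists N'. intros a b Ha Hb'. unfold Rdist. apply HN'; auto. }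
  destruct (limv_spec _ Hcc (e/2) ltac:(lra)) as [N2 HN2]. specialize (HN2 (N + N2)%nat ltac:(lia)).
  unfold Rdist in HN2. specialize (HN k (N + N2)%nat t Hk ltac:(lia) Ht). rabs. Qed.


Definition Eul d (A : nat -> R -> R) (f : R -> R) (g : nat -> R -> R -> R) (h : R) (C : R -> R) : R -> R :=
  fun t => f t + rsum d (fun i => RSint (fun s => g i s (C (Rmax 0 (s - h)))) (A i) 0 t).

Fixpoint Cs d A f g h (k : nat) : R -> R :=
  match k with O => fun _ => f 0 | S k' => Eul d A f g h (Cs d A f g h k') end.

Lemma cont01_plus f1 f2 : cont01 f1 -> cont01 f2 -> cont01 (fun t => f1 t + f2 t).
Proof. intros H1 H2 t Ht e He. destruct (H1 t Ht (e/2) ltac:(lra)) as [d1 [Hd1 H1']].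
  destruct (H2 t Ht (e/2) ltac:(lra)) as [d2 [Hd2 H2']]. exists (Rmin d1 d2). split. apply Rmin_glb_lt; auto.
  intros s Hs Hst. pose proof (Rmin_l d1 d2). pose proof (Rmin_r d1 d2).
  specialize (H1' s Hs ltac:(lra)). specialize (H2' s Hs ltac:(lra)). rabs. Qed.

Lemma Rmax_in s h : 0 <= s <= 1 -> 0 <= h -> 0 <= Rmax 0 (s - h) <= 1.
Proof. intros. unfold Rmax; destruct Rle_dec; lra. Qed.

Lemma phi_cont g C h : cont01R g -> cont01 C -> 0 <= h -> cont01 (fun s => g s (C (Rmax 0 (s - h)))).
Proof. intros Hg HC Hh. apply (cont01_comp g (fun s => C (Rmax 0 (s - h)))); auto. apply cont01_shift; auto. Qed.

Lemma Eul_cont d A f g h C : (forall i, (i < d)%nat -> cont01 (A i)) -> (forall i, (i < d)%nat -> bounded_variation01 (A i)) ->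
  cont01 f -> (forall i, (i < d)%nat -> cont01R (g i)) -> 0 <= h -> cont01 C -> cont01 (Eul d A f g h C).
Proof. intros HAc HAb hf hg Hh HC. unfold Eul. apply cont01_plus; auto.
  apply (cont01_rsum d (fun i t => RSint (fun s => g i s (C (Rmax 0 (s - h)))) (A i) 0 t)).
  intros i Hi. apply int_cont; auto. apply phi_cont; auto. Qed.

Lemma Cs_cont d A f g h k : (forall i, (i < d)%nat -> cont01 (A i)) -> (forall i, (i < d)%nat -> bounded_variation01 (A i)) ->
  cont01 f -> (forall i, (i < d)%nat -> cont01R (g i)) -> 0 <= h -> cont01 (Cs d A f g h k).
Proof. intros HAc HAb hf hg Hh. induction k; simpl.
  - intros t Ht e He. exists 1. split; [lra|]. intros. rewrite Rminus_diag, Rabs_R0; auto.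
  - apply Eul_cont; auto. Qed.

Lemma phi_int d A g C h i t : (forall i, (i < d)%nat -> cont01 (A i)) -> (forall i, (i < d)%nat -> bounded_variation01 (A i)) ->
  (forall i, (i < d)%nat -> cont01R (g i)) -> 0 <= h -> cont01 C -> (i < d)%nat -> 0 <= t <= 1 ->
  is_RS_integral (fun s => g i s (C (Rmax 0 (s - h)))) (A i) 0 t (RSint (fun s => g i s (C (Rmax 0 (s - h)))) (A i) 0 t).
Proof. intros HAc HAb hg Hh HC Hi Ht. destruct (RS_exists01 (fun s => g i s (C (Rmax 0 (s - h)))) (A i) t) as [I HI]; auto.
  apply phi_cont; auto. eapply RSint_spec; eauto. Qed.

Lemma RSint_point h A : RSint h A 0 0 = 0.
Proof. apply RSint_eq. lra. apply RS_point. Qed.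

Lemma Eul_0 d A f g h C : Eul d A f g h C 0 = f 0.
Proof. unfold Eul. rewrite (rsum_ext d _ (fun _ => 0)). rewrite rsum_zero; ring. intros; apply RSint_point. Qed.

Lemma Cs_agree d A f g h k : (forall i, (i < d)%nat -> cont01 (A i)) -> (forall i, (i < d)%nat -> bounded_variation01 (A i)) ->
  cont01 f -> (forall i, (i < d)%nat -> cont01R (g i)) -> 0 < h ->
  forall t, 0 <= t <= 1 -> t <= INR k * h -> Cs d A f g h (S k) t = Cs d A f g h k t.
Proof. intros HAc HAb hf hg Hh. induction k; intros t Ht Htk.
  - simpl in Htk. replace t with 0 by lra. simpl. apply Eul_0.
  - change (Eul d A f g h (Cs d A f g h (S k)) t = Eul d A f g h (Cs d A f g h k) t). unfold Eul. f_equal.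
    apply rsum_ext. intros i Hi. eapply RSint_ext. lra. apply (phi_int d); auto; try lra. apply Cs_cont; auto; lra.
    intros s Hs. rewrite IHk; auto. apply Rmax_in; lra. rewrite S_INR in Htk. unfold Rmax; destruct Rle_dec.
    lra. apply Rmult_le_pos; [apply pos_INR|lra]. Qed.

Lemma Cs_euler d A f g h m : (forall i, (i < d)%nat -> cont01 (A i)) -> (forall i, (i < d)%nat -> bounded_variation01 (A i)) ->
  cont01 f -> (forall i, (i < d)%nat -> cont01R (g i)) -> 0 < h -> 1 <= INR (S m) * h ->
  forall t, 0 <= t <= 1 -> Cs d A f g h (S m) t =
    f t + rsum d (fun i => RSint (fun s => g i s (Cs d A f g h (S m) (Rmax 0 (s - h)))) (A i) 0 t).
Proof. intros HAc HAb hf hg Hh Hm t Ht. change (Eul d A f g h (Cs d A f g h m) t = 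
    f t + rsum d (fun i => RSint (fun s => g i s (Cs d A f g h (S m) (Rmax 0 (s - h)))) (A i) 0 t)).
  unfold Eul. f_equal. apply rsum_ext. intros i Hi. eapply RSint_ext. lra. apply (phi_int d); auto; try lra. apply Cs_cont; auto; lra.
  intros s Hs. rewrite Cs_agree; auto. apply Rmax_in; lra. rewrite S_INR in Hm. unfold Rmax; destruct Rle_dec.
  lra. apply Rmult_le_pos; [apply pos_INR|lra]. Qed.


Lemma exp_le x y : x <= y -> exp x <= exp y.
Proof. intros H. destruct (Rle_lt_or_eq_dec _ _ H). left; apply exp_increasing; auto. subst; lra. Qed.

Definition Psi d A (F c : R) (t : R) := (F + 1) * exp (c * Wf d A t) - 1.

Lemma Psi_mono d A F c u v : (forall i, (i < d)%nat -> bounded_variation01 (A i)) -> 0 <= F -> 0 <= c ->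
  0 <= u <= v -> v <= 1 -> Psi d A F c u <= Psi d A F c v.
Proof. intros HA HF Hc Huv Hv. unfold Psi. pose proof (Wf_mono d A u v HA Huv Hv).
  assert (exp (c * Wf d A u) <= exp (c * Wf d A v)) by (apply exp_le; nra). nra. Qed.

Lemma Cs_bound d A f g h m c F : (forall i, (i < d)%nat -> cont01 (A i)) -> (forall i, (i < d)%nat -> bounded_variation01 (A i)) ->
  cont01 f -> (forall i, (i < d)%nat -> cont01R (g i)) -> 0 < h -> 1 <= INR (S m) * h -> 0 <= c ->
  (forall i t x, (i < d)%nat -> 0 <= t <= 1 -> Rabs (g i t x) <= c * (1 + Rabs x)) ->
  (forall t, 0 <= t <= 1 -> Rabs (f t) <= F) ->
  forall t, 0 <= t <= 1 -> Rabs (Cs d A f g h (S m) t) <= Psi d A F c t.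
Proof. intros HAc HAb hf hg Hh Hm Hc Hgr HF.
  set (C := Cs d A f g h (S m)).
  assert (HF0 : 0 <= F) by (pose proof (HF 0 ltac:(lra)); pose proof (Rabs_pos (f 0)); lra).
  assert (HC : cont01 C) by (apply Cs_cont; auto; lra).
  assert (HW0 : Wf d A 0 = 0) by (apply Wf_0; auto).
  assert (Hk : forall k t, 0 <= t <= 1 -> t <= INR k * h -> Rabs (C t) <= Psi d A F c t).
  { induction k; intros t Ht Htk.
    - simpl in Htk. replace t with 0 by lra. unfold C. simpl. rewrite Eul_0. unfold Psi. rewrite HW0.
      rewrite Rmult_0_r, exp_0. specialize (HF 0 ltac:(lra)). lra.
    - apply Rle_plus_epsilon. intros e He. unfold C. rewrite Cs_euler; auto. fold C.
      destruct (int_bound d A (fun i s => g i s (C (Rmax 0 (s - h))))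
         (fun i => RSint (fun s => g i s (C (Rmax 0 (s - h)))) (A i) 0 t)
         (fun s => c * (F + 1) * exp (c * Wf d A s)) t HAb Ht) with (e := e) as [N [HN Hb]]; auto.
      + intros i Hi. apply (phi_int d); auto; lra.
      + intros i s Hi Hs. eapply Rle_trans. apply Hgr; auto; lra.
        assert (Hmx : 0 <= Rmax 0 (s - h) <= 1) by (apply Rmax_in; lra).
        assert (Hmk : Rmax 0 (s - h) <= INR k * h).
        { rewrite S_INR in Htk. unfold Rmax; destruct Rle_dec. lra. apply Rmult_le_pos; [apply pos_INR|lra]. }
        specialize (IHk _ Hmx Hmk).
        assert (Psi d A F c (Rmax 0 (s - h)) <= Psi d A F c s) by (apply (Psi_mono d A F c (Rmax 0 (s - h)) s); auto; try (unfold Rmax; destruct Rle_dec); lra).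
        unfold Psi in *. nra.
      + intros s Hs. pose proof (exp_pos (c * Wf d A s)). apply Rmult_le_pos; [|lra]. nra.
      + pose proof (unif_part 0 t N ltac:(lra) HN) as Hp. set (u := unif 0 t N) in *.
        assert (Hw : forall k, (k < N)%nat -> Wf d A (u k) <= Wf d A (u (S k))).
        { intros k' Hk'. apply Wf_mono; auto. pose proof (part_in _ _ _ _ Hp k' ltac:(lia)).
          destruct Hp as [_ [_ Hmo]]. specialize (Hmo k' Hk'). lra. pose proof (part_in _ _ _ _ Hp (S k') ltac:(lia)). lra. }
        pose proof (tele_exp c N (fun k => Wf d A (u k)) Hc Hw) as Ht2. simpl in Ht2.
        destruct Hp as [Hu0 [HuN _]]. rewrite Hu0, HuN, HW0, Rmult_0_r, exp_0 in Ht2.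
        rewrite (rsum_ext N _ (fun k => (F + 1) * (c * exp (c * Wf d A (u k)) * (Wf d A (u (S k)) - Wf d A (u k))))) in Hb
          by (intros; ring).
        rewrite rsum_scal in Hb.
        pose proof (rsum_abs d (fun i => RSint (fun s => g i s (C (Rmax 0 (s - h)))) (A i) 0 t)).
        cbv beta in H. specialize (HF t Ht). unfold Psi.
        assert (Hm2 : (F + 1) * rsum N (fun k => c * exp (c * Wf d A (u k)) * (Wf d A (u (S k)) - Wf d A (u k)))
          <= (F + 1) * (exp (c * Wf d A t) - 1)) by (apply Rmult_le_compat_l; lra).
        rabs. }
  intros t Ht. apply (Hk (S m)); auto. lra. Qed.


Lemma Cs_lip d A f g h m c M0 : (forall i, (i < d)%nat -> cont01 (A i)) -> (forall i, (i < d)%nat -> bounded_variation01 (A i)) ->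
  cont01 f -> (forall i, (i < d)%nat -> cont01R (g i)) -> 0 < h -> 1 <= INR (S m) * h -> 0 <= c ->
  (forall i t x, (i < d)%nat -> 0 <= t <= 1 -> Rabs (g i t x) <= c * (1 + Rabs x)) ->
  (forall t, 0 <= t <= 1 -> Rabs (Cs d A f g h (S m) t) <= M0) ->
  forall t t', 0 <= t' <= t -> t <= 1 ->
  Rabs (Cs d A f g h (S m) t - Cs d A f g h (S m) t') <= Rabs (f t - f t') + c * (1 + M0) * (Wf d A t - Wf d A t').
Proof. intros HAc HAb hf hg Hh Hm Hc Hgr HM t t' Htt' Ht.
  set (C := Cs d A f g h (S m)).
  assert (HC : cont01 C) by (apply Cs_cont; auto; lra).
  unfold C. rewrite (Cs_euler d A f g h m) by (auto; lra). rewrite (Cs_euler d A f g h m) by (auto; lra). fold C.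
  replace (f t + rsum d (fun i => RSint (fun s => g i s (C (Rmax 0 (s - h)))) (A i) 0 t) -
    (f t' + rsum d (fun i => RSint (fun s => g i s (C (Rmax 0 (s - h)))) (A i) 0 t')))
   with ((f t - f t') + rsum d (fun i => RSint (fun s => g i s (C (Rmax 0 (s - h)))) (A i) 0 t -
         RSint (fun s => g i s (C (Rmax 0 (s - h)))) (A i) 0 t')) by (rewrite rsum_minus; ring).
  eapply Rle_trans. apply Rabs_triang. apply Rplus_le_compat_l.
  eapply Rle_trans. apply rsum_abs.
  unfold Wf. rewrite <- rsum_minus. rewrite <- rsum_scal. apply rsum_le. intros i Hi.
  rewrite (Var_add (A i) 0 t' t) by (auto; lra). replace (Var (A i) 0 t' + Var (A i) t' t - Var (A i) 0 t') with (Var (A i) t' t) by ring.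
  apply (int_diff (fun s => g i s (C (Rmax 0 (s - h)))) (A i) t t'); auto; try lra.
  all: try (apply (phi_int d); auto; lra).
  intros s Hs. eapply Rle_trans. apply Hgr; auto; lra. apply Rmult_le_compat_l; auto.
  pose proof (HM (Rmax 0 (s - h)) ltac:(apply Rmax_in; lra)) as HH. fold C in HH. lra. Qed.

Lemma existence d A f g c : (forall i, (i < d)%nat -> cont01 (A i)) -> (forall i, (i < d)%nat -> bounded_variation01 (A i)) ->
  cont01 f -> (forall i, (i < d)%nat -> cont01R (g i)) -> 0 <= c ->
  (forall i t x, (i < d)%nat -> 0 <= t <= 1 -> Rabs (g i t x) <= c * (1 + Rabs x)) ->
  exists B, cont01 B /\ is_solution d A f g B.
Proof. intros HAc HAb hf hg Hc Hgr.
  destruct (cont01_bounded f hf) as [F HF].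
  assert (HF0 : 0 <= F) by (pose proof (HF 0 ltac:(lra)); pose proof (Rabs_pos (f 0)); lra).
  set (hh := fun n : nat => / INR (S n)).
  assert (Hh : forall n, 0 < hh n) by (intros n; unfold hh; apply Rinv_0_lt_compat; apply lt_0_INR; lia).
  assert (Hh1 : forall n, 1 <= INR (S n) * hh n).
  { intros n. unfold hh. rewrite Rinv_r. lra. apply not_0_INR. lia. }
  set (u := fun n => Cs d A f g (hh n) (S n)).
  set (M0 := Psi d A F c 1).
  assert (Hub : forall n t, 0 <= t <= 1 -> Rabs (u n t) <= M0).
  { intros n t Ht. unfold u. eapply Rle_trans. apply (Cs_bound d A f g (hh n) n c F); auto.
    apply Psi_mono; auto; lra. }
  assert (HM0 : 0 <= M0) by (pose proof (Hub O 0 ltac:(lra)); pose proof (Rabs_pos (u O 0)); lra).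
  pose proof (uc_of_cont01 _ (Wf_cont d A HAc HAb)) as HW.
  pose proof (uc_of_cont01 f hf) as Huf.
  set (K := c * (1 + M0)). assert (HK : 0 <= K) by (unfold K; apply Rmult_le_pos; lra).
  assert (Heq : forall e, 0 < e -> exists dl, 0 < dl /\ forall n s t, 0 <= s <= 1 -> 0 <= t <= 1 -> Rabs (s - t) < dl ->
     Rabs (u n s - u n t) < e).
  { intros e He. destruct (Huf (e/2) ltac:(lra)) as [d1 [Hd1 H1]].
    assert (Hq : e / (2 * (K + 1)) * (2 * (K + 1)) = e) by (field; lra).
    destruct (HW (e / (2 * (K + 1)))) as [d2 [Hd2 H2]]. apply Rdiv_lt_0_compat; lra.
    exists (Rmin d1 d2). split. apply Rmin_glb_lt; auto. intros n s t Hs Ht Hst.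
    pose proof (Rmin_l d1 d2). pose proof (Rmin_r d1 d2).
    specialize (H1 s t Hs Ht ltac:(lra)). specialize (H2 s t Hs Ht ltac:(lra)).
    assert (Hqq : 0 < e / (2 * (K + 1))) by (apply Rdiv_lt_0_compat; lra).
    assert (HKq : K * (e / (2 * (K + 1))) < e / 2) by nra.
    destruct (Rle_dec t s).
    - pose proof (Cs_lip d A f g (hh n) n c M0 HAc HAb hf hg (Hh n) (Hh1 n) Hc Hgr (Hub n) s t ltac:(lra) ltac:(lra)).
      fold (u n) in H3. assert (K * (Wf d A s - Wf d A t) <= K * (e / (2 * (K + 1)))) by (apply Rmult_le_compat_l; auto; rabs).
      fold K in H3. rabs.
    - pose proof (Cs_lip d A f g (hh n) n c M0 HAc HAb hf hg (Hh n) (Hh1 n) Hc Hgr (Hub n) t s ltac:(lra) ltac:(lra)).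
      fold (u n) in H3. assert (K * (Wf d A t - Wf d A s) <= K * (e / (2 * (K + 1)))) by (apply Rmult_le_compat_l; auto; rabs).
      fold K in H3. rabs. }
  destruct (arzela u M0 Hub Heq) as [sigma [B [Hsig Hconv]]].
  assert (HB : cont01 B).
  { intros t Ht e He. destruct (Heq (e/3) ltac:(lra)) as [dl [Hdl Hd]].
    destruct (Hconv (e/3) ltac:(lra)) as [N HN]. exists dl. split; auto. intros s Hs Hst.
    pose proof (HN N s (le_n N) Hs). pose proof (HN N t (le_n N) Ht). pose proof (Hd (sigma N) s t Hs Ht Hst). rabs. }
  exists B. split; auto. intros t Ht.
  assert (HgB : forall i, (i < d)%nat -> is_RS_integral (fun s => g i s (B s)) (A i) 0 t (RSint (fun s => g i s (B s)) (A i) 0 t)).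
  { intros i Hi. destruct (RS_exists01 (fun s => g i s (B s)) (A i) t) as [I HI]; auto.
    apply cont01_comp; auto. eapply RSint_spec; eauto. }
  exists (fun i => RSint (fun s => g i s (B s)) (A i) 0 t). split; auto.
  apply close_eq. intros e He.
  set (W1 := Wf d A t). assert (HW1 : 0 <= W1).
  { unfold W1. rewrite <- (Wf_0 d A HAb). apply Wf_mono; auto; lra. }
  set (eta := e / (3 * (W1 + 1))).
  assert (Heta : 0 < eta) by (unfold eta; apply Rdiv_lt_0_compat; lra).
  assert (HetaW : eta * W1 <= e / 3).
  { unfold eta. apply Rmult_le_reg_r with (3 * (W1 + 1)). lra.
    replace (e / (3 * (W1 + 1)) * W1 * (3 * (W1 + 1))) with (e * W1) by (field; lra). nra. }
  destruct (finite_delta d (fun i dl => forall s z, 0 <= s <= 1 -> Rabs (z - B s) < dl ->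
     Rabs (g i s z - g i s (B s)) < eta)) as [eg [Heg Hg']].
  { intros i dl dl' Hdl H s z Hs Hz. apply H; auto. lra. }
  { intros i Hi. apply curve_uc; auto. }
  destruct (Heq (eg/2) ltac:(lra)) as [dl [Hdl Hd]].
  destruct (Hconv (eg/2) ltac:(lra)) as [N1 HN1].
  destruct (Hconv (e/3) ltac:(lra)) as [N3 HN3].
  destruct (eps_n_small dl Hdl) as [N2 HN2].
  set (k := (N1 + N2 + N3)%nat). set (n := sigma k).
  assert (Hnk : (k <= n)%nat) by (apply incr_ge; auto).
  assert (Hhn : hh n < dl) by (unfold hh; rewrite S_INR; apply HN2; lia).
  set (C := u n).
  assert (HCc : cont01 C) by (apply Cs_cont; auto; left; apply Hh).
  assert (HCt : C t = f t + rsum d (fun i => RSint (fun s => g i s (C (Rmax 0 (s - hh n)))) (A i) 0 t)).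
  { unfold C, u. apply (Cs_euler d A f g (hh n) n); auto. }
  destruct (int_bound d A (fun i s => g i s (C (Rmax 0 (s - hh n))) + -1 * g i s (B s))
     (fun i => RSint (fun s => g i s (C (Rmax 0 (s - hh n)))) (A i) 0 t + -1 * RSint (fun s => g i s (B s)) (A i) 0 t)
     (fun _ => eta) t HAb Ht) with (e := e / 3) as [N [HN Hb]]; auto; try lra.
  - intros i Hi. apply RS_plus. apply (phi_int d); auto. left; apply Hh. apply RS_scal. apply HgB; auto.
  - intros i s Hi Hs. left. replace (g i s (C (Rmax 0 (s - hh n))) + -1 * g i s (B s)) with
      (g i s (C (Rmax 0 (s - hh n))) - g i s (B s)) by ring. apply Hg'; auto. lra.
    assert (Hmx : 0 <= Rmax 0 (s - hh n) <= 1) by (apply Rmax_in; [lra| left; apply Hh]).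
    pose proof (Hd n (Rmax 0 (s - hh n)) s Hmx ltac:(lra) ltac:(pose proof (Hh n); unfold Rmax; destruct Rle_dec; rabs)).
    pose proof (HN1 k s ltac:(lia) ltac:(lra)). fold n C in H0. fold C in H. rabs.
  - intros; lra.
  - rewrite rsum_scal in Hb. rewrite (rsum_tele N (fun k => Wf d A (unif 0 t N k))) in Hb.
    pose proof (unif_part 0 t N ltac:(lra) HN) as [Hu0 [HuN _]]. rewrite Hu0, HuN, (Wf_0 d A HAb) in Hb. fold W1 in Hb.
    pose proof (rsum_abs d (fun i => RSint (fun s => g i s (C (Rmax 0 (s - hh n)))) (A i) 0 t +
        -1 * RSint (fun s => g i s (B s)) (A i) 0 t)) as Habs. cbv beta in Habs.
    rewrite rsum_plus, rsum_scal in Habs.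
    pose proof (HN3 k t ltac:(lia) Ht). fold n C in H.
    rewrite HCt in H. rabs. Qed.


Lemma sol_RSint d A f g B : is_solution d A f g B -> forall t, 0 <= t <= 1 ->
  (forall i, (i < d)%nat -> is_RS_integral (fun s => g i s (B s)) (A i) 0 t (RSint (fun s => g i s (B s)) (A i) 0 t)) /\
  B t = f t + rsum d (fun i => RSint (fun s => g i s (B s)) (A i) 0 t).
Proof. intros Hs t Ht. destruct (Hs t Ht) as [I [HI HB]]. split.
  - intros i Hi. eapply RSint_spec; eauto.
  - rewrite HB. f_equal. apply rsum_ext. intros i Hi. symmetry. apply RSint_eq; auto; lra. Qed.

Lemma uniqueness d A f g B1 B2 : (forall i, (i < d)%nat -> cont01 (A i)) -> (forall i, (i < d)%nat -> bounded_variation01 (A i)) ->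
  (forall p, 0 < p -> exists L, 0 <= L /\ forall i t x z, (i < d)%nat ->
       0 <= t <= 1 -> -p <= x <= p -> -p <= z <= p ->
       Rabs (g i t x - g i t z) <= L * Rabs (x - z)) ->
  cont01 B1 -> is_solution d A f g B1 -> cont01 B2 -> is_solution d A f g B2 ->
  forall t, 0 <= t <= 1 -> B1 t = B2 t.
Proof. intros HAc HAb Hlip HB1 Hs1 HB2 Hs2.
  destruct (cont01_bounded B1 HB1) as [M1 HM1]. destruct (cont01_bounded B2 HB2) as [M2 HM2].
  assert (HM10 : 0 <= M1) by (pose proof (HM1 0 ltac:(lra)); pose proof (Rabs_pos (B1 0)); lra).
  assert (HM20 : 0 <= M2) by (pose proof (HM2 0 ltac:(lra)); pose proof (Rabs_pos (B2 0)); lra).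
  destruct (Hlip (M1 + M2 + 1) ltac:(lra)) as [L [HL HLip]].
  set (m := M1 + M2).
  assert (Hj : forall j t, 0 <= t <= 1 -> Rabs (B1 t - B2 t) <= m * (L * Wf d A t) ^ j / INR (Factorial.fact j)).
  { induction j; intros t Ht.
    - simpl. unfold m. specialize (HM1 t Ht). specialize (HM2 t Ht). rewrite Rdiv_1_r, Rmult_1_r. rabs.
    - apply Rle_plus_epsilon. intros e He.
      destruct (sol_RSint d A f g B1 Hs1 t Ht) as [HI1 E1]. destruct (sol_RSint d A f g B2 Hs2 t Ht) as [HI2 E2].
      assert (HWt : forall s, 0 <= s <= 1 -> 0 <= Wf d A s).
      { intros s Hs. rewrite <- (Wf_0 d A HAb). apply Wf_mono; auto; lra. }
      destruct (int_bound d A (fun i s => g i s (B1 s) + -1 * g i s (B2 s))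
         (fun i => RSint (fun s => g i s (B1 s)) (A i) 0 t + -1 * RSint (fun s => g i s (B2 s)) (A i) 0 t)
         (fun s => L * (m * (L * Wf d A s) ^ j / INR (Factorial.fact j))) t HAb Ht) with (e := e) as [N [HN Hb]]; auto.
      + intros i Hi. apply RS_plus. apply HI1; auto. apply RS_scal. apply HI2; auto.
      + intros i s Hi Hs. replace (g i s (B1 s) + -1 * g i s (B2 s)) with (g i s (B1 s) - g i s (B2 s)) by ring.
        eapply Rle_trans. apply HLip; auto; try lra.
        specialize (HM1 s ltac:(lra)); rabs. specialize (HM2 s ltac:(lra)); rabs.
        apply Rmult_le_compat_l; auto. apply IHj; lra.
      + intros s Hs. apply Rmult_le_pos; auto. apply div_nonneg. apply Rmult_le_pos. unfold m; lra.
        apply pow_le. apply Rmult_le_pos; auto. apply HWt; lra. apply lt_0_INR. apply Factorial.lt_O_fact.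
      + pose proof (unif_part 0 t N ltac:(lra) HN) as Hp. set (u := unif 0 t N) in *.
        assert (Hw : forall k, (k < N)%nat -> Wf d A (u k) <= Wf d A (u (S k))).
        { intros k' Hk'. apply Wf_mono; auto. pose proof (part_in _ _ _ _ Hp k' ltac:(lia)).
          destruct Hp as [_ [_ Hmo]]. specialize (Hmo k' Hk'). lra. pose proof (part_in _ _ _ _ Hp (S k') ltac:(lia)). lra. }
        assert (Hw0 : 0 <= Wf d A (u O)) by (apply HWt; pose proof (part_in _ _ _ _ Hp O ltac:(lia)); lra).
        pose proof (tele_pow j N (fun k => Wf d A (u k)) Hw0 Hw) as Ht2. cbv beta in Ht2.
        destruct Hp as [Hu0 [HuN _]]. rewrite Hu0, HuN, (Wf_0 d A HAb) in Ht2.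
        rewrite pow_i in Ht2 by lia.
        assert (Hfj : 0 < INR (Factorial.fact j)) by (apply lt_0_INR; apply Factorial.lt_O_fact).
        rewrite (rsum_ext N _ (fun k => (L ^ S j * m / INR (Factorial.fact j)) * (Wf d A (u k) ^ j * (Wf d A (u (S k)) - Wf d A (u k))))) in Hb.
        2: { intros k _. rewrite Rpow_mult_distr. simpl. field. lra. }
        rewrite rsum_scal in Hb.
        assert (Hc0 : 0 <= L ^ S j * m / INR (Factorial.fact j)) by (apply div_nonneg; auto; apply Rmult_le_pos; [apply pow_le; auto| unfold m; lra]).
        pose proof (Rmult_le_compat_l _ _ _ Hc0 Ht2) as Ht3.
        replace (L ^ S j * m / INR (Factorial.fact j) * ((Wf d A t ^ S j - 0) / INR (S j))) with
          (m * (L * Wf d A t) ^ S j / INR (Factorial.fact (S j))) in Ht3.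
        2: { rewrite Rpow_mult_distr. change (Factorial.fact (S j)) with (S j * Factorial.fact j)%nat. rewrite mult_INR.
             field. split; lra || (apply not_0_INR; lia). }
        pose proof (rsum_abs d (fun i => RSint (fun s => g i s (B1 s)) (A i) 0 t + -1 * RSint (fun s => g i s (B2 s)) (A i) 0 t)) as Habs.
        cbv beta in Habs. rewrite rsum_plus, rsum_scal in Habs.
        rewrite E1, E2. rabs. }
  intros t Ht. assert (Hd : B1 t - B2 t = 0); [|lra].
  apply close_eq. intros e He. rewrite Rminus_0_r.
  pose proof (cv_speed_pow_fact (L * Wf d A t) (e / (m + 1)) ltac:(apply Rdiv_lt_0_compat; unfold m; lra)) as [N HN].
  specialize (HN N (le_n N)). unfold Rdist in HN. rewrite Rminus_0_r in HN.
  specialize (Hj N t Ht). unfold Rdiv in Hj. rewrite Rmult_assoc in Hj.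
  assert (HmN : m * ((L * Wf d A t) ^ N * / INR (Factorial.fact N)) <= m * (e / (m + 1))).
  { apply Rmult_le_compat_l. unfold m; lra. unfold Rdiv in HN. pose proof (RRle_abs ((L * Wf d A t) ^ N * / INR (Factorial.fact N))). lra. }
  assert (m * (e / (m + 1)) <= e).
  { apply Rmult_le_reg_r with (m + 1). unfold m; lra. replace (m * (e / (m + 1)) * (m + 1)) with (m * e) by (field; unfold m; lra). unfold m; nra. }
  lra. Qed.


Theorem proposition3p3 (d : nat) (A : nat -> R -> R) (f : R -> R)
  (g : nat -> R -> R -> R)
  (hA_cont : forall i, (i < d)%nat -> cont01 (A i))
  (hA_bv : forall i, (i < d)%nat -> bounded_variation01 (A i))
  (hf : cont01 f)
  (hg_cont : forall i, (i < d)%nat -> cont01R (g i))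
  (hg_growth : exists c, 0 <= c /\ forall i t x, (i < d)%nat -> 0 <= t <= 1 ->
      Rabs (g i t x) <= c * (1 + Rabs x)) :
  (exists B, cont01 B /\ is_solution d A f g B) /\
  ((forall p, 0 < p -> exists L, 0 <= L /\ forall i t x z, (i < d)%nat ->
       0 <= t <= 1 -> -p <= x <= p -> -p <= z <= p ->
       Rabs (g i t x - g i t z) <= L * Rabs (x - z)) ->
   forall B1 B2, cont01 B1 -> is_solution d A f g B1 ->
     cont01 B2 -> is_solution d A f g B2 ->
     forall t, 0 <= t <= 1 -> B1 t = B2 t).
Proof.
  split.
  - destruct hg_growth as [c [Hc Hgr]]. apply (existence d A f g c); auto.
  - intros Hlip B1 B2 H1 H2 H3 H4 t Ht. apply (uniqueness d A f g B1 B2); auto.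
Qed.
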